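(* For $k>0$ and $\varepsilon\in\mathbb{R}$ consider the initial value problem $$\Delta^3u=-\frac{1}{u^3},\quad u(0)=k,\quad \Delta u(0)=-\varepsilon,\quad \Delta^2u(0)=1,\quad u'(0)=(\Delta u)'(0)=(\Delta^2u)'(0)=0, \tag{P}$$ and let $S_k:=\{\varepsilon>0:\ \text{(P) has a positive entire radial solution}\}$. There exists $k_0>0$ such that for every $k\ge k_0$ the set $S_k$ is nonempty and bounded above, and, writing $\varepsilon_k^*:=\sup S_k$, problem (P) with $\varepsilon=\varepsilon_k^*$ has a positive entire radial solution.
   Context: A radial function on $\mathbb{R}^3$ is written $u(r)$, $r=|x|$; for radial functions $\Delta w=w''+\frac{2}{r}w'$. A positive entire radial solution is a smooth radial function defined and positive on all of $\mathbb{R}^3$ solving the ODE with the given initial data at $r=0$. *)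

(* Defs.v *)
From Stdlib Require Import Reals Lra.
From Coquelicot Require Import Coquelicot.
Open Scope R_scope.

Definition smooth (f : R -> R) : Prop :=
  forall (n : nat) (x : R), ex_derive_n f n x.

Definition even_fun (f : R -> R) : Prop := forall r, f (- r) = f r.

(* A radial profile r |-> f r (r >= 0) gives a smooth function f(|x|) on R^3
   iff it extends to an even smooth function on R; we use that extension. *)
Definition smooth_radial (f : R -> R) : Prop := smooth f /\ even_fun f.

Definition radLap (f : R -> R) (r : R) : R :=
  Derive_n f 2 r + 2 / r * Derive f r.

(* (P) has a positive entire radial solution for the data k, eps:
   u is a smooth radial function, positive everywhere, v = Delta u and
   w = Delta^2 u (smooth radial, hence their values at 0 are the continuous
   extensions), Delta^3 u = -1/u^3, and the initial conditions hold. *)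
Definition has_pos_entire_radial_sol (k eps : R) : Prop :=
  exists u v w : R -> R,
    smooth_radial u /\ smooth_radial v /\ smooth_radial w /\
    (forall r, 0 < u r) /\
    (forall r, 0 < r -> radLap u r = v r) /\
    (forall r, 0 < r -> radLap v r = w r) /\
    (forall r, 0 < r -> radLap w r = - / (u r ^ 3)) /\
    u 0 = k /\ v 0 = - eps /\ w 0 = 1 /\
    Derive u 0 = 0 /\ Derive v 0 = 0 /\ Derive w 0 = 0.

Definition S_k (k : R) : R -> Prop :=
  fun eps => 0 < eps /\ has_pos_entire_radial_sol k eps.

(* Main.v *)
Require Import Defs.
From Stdlib Require Import Reals.
From Coquelicot Require Import Coquelicot.
Open Scope R_scope.
From Stdlib Require Import Lra Psatz Classical IndefiniteDescription.

Ltac rring := match goal with |- ?a = ?b => change (@eq R a b) end; ring.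
Ltac rfield := match goal with |- ?a = ?b => change (@eq R a b) end; field.

Definition cont (f : R -> R) : Prop := forall x, continuous f x.

Lemma cont_eps (f : R -> R) (x : R) :
  (forall eps, 0 < eps -> exists d, 0 < d /\ forall y, Rabs (y - x) < d -> Rabs (f y - f x) < eps) ->
  continuous f x.
Proof.
  intros H. apply continuity_pt_filterlim.
  intros eps Heps. destruct (H eps Heps) as [d [Hd Hy]].
  exists d. split; [lra|]. intros y [_ Hy']. apply Hy. exact Hy'.
Qed.

Lemma cont_eps_inv (f : R -> R) (x : R) : continuous f x ->
  forall eps, 0 < eps -> exists d, 0 < d /\ forall y, Rabs (y - x) < d -> Rabs (f y - f x) < eps.
Proof.
  intros H. apply continuity_pt_filterlim in H.
  intros eps Heps. destruct (H eps Heps) as [d [Hd Hy]].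
  exists d. split; [lra|]. intros y Hy'.
  destruct (Req_dec y x) as [->|Hne]. rewrite Rminus_diag, Rabs_R0; lra.
  apply Hy. split; [split; [exact I| auto] | exact Hy'].
Qed.

Lemma pow_le1 x n : 0 <= x <= 1 -> x ^ n <= 1.
Proof.
  intros Hx. induction n; simpl. lra.
  assert (0 <= x ^ n) by (apply pow_le; lra). nra.
Qed.

Lemma dcont (f : R -> R) x : ex_derive f x -> continuous f x.
Proof. intros H. apply (ex_derive_continuous (K:=R_AbsRing) (V:=R_NormedModule)). exact H. Qed.

Lemma exR_cont (f : R -> R) a b : (forall z, Rmin a b <= z <= Rmax a b -> continuous f z) -> ex_RInt f a b.
Proof. intros H. apply (ex_RInt_continuous (V:=R_CompleteNormedModule)). exact H. Qed.

Lemma RInt_minusR (f g : R -> R) a b : ex_RInt f a b -> ex_RInt g a b ->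
  RInt (fun x => f x - g x) a b = RInt f a b - RInt g a b.
Proof. intros Hf Hg. apply (RInt_minus (V:=R_CompleteNormedModule)); auto. Qed.

Lemma RInt_plusR (f g : R -> R) a b : ex_RInt f a b -> ex_RInt g a b ->
  RInt (fun x => f x + g x) a b = RInt f a b + RInt g a b.
Proof. intros Hf Hg. apply (RInt_plus (V:=R_CompleteNormedModule)); auto. Qed.

Lemma RInt_scalR (f : R -> R) a b c : ex_RInt f a b ->
  RInt (fun x => c * f x) a b = c * RInt f a b.
Proof. intros Hf. apply (RInt_scal (V:=R_CompleteNormedModule)); auto. Qed.

Lemma RInt_constR a b c : RInt (fun _ => c) a b = c * (b - a).
Proof. rewrite (RInt_const (V:=R_CompleteNormedModule)). unfold scal; simpl; unfold mult; simpl. ring. Qed.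

Lemma RInt_ChaslesR (f : R -> R) a b c : ex_RInt f a b -> ex_RInt f b c ->
  RInt f a b + RInt f b c = RInt f a c.
Proof. intros H1 H2. apply (RInt_Chasles (V:=R_CompleteNormedModule)); auto. Qed.

Lemma ex_RInt_minusR (f g : R -> R) a b : ex_RInt f a b -> ex_RInt g a b ->
  ex_RInt (fun x => f x - g x) a b.
Proof. intros Hf Hg. apply (ex_RInt_minus (V:=R_NormedModule)); auto. Qed.

Lemma ex_RInt_plusR (f g : R -> R) a b : ex_RInt f a b -> ex_RInt g a b ->
  ex_RInt (fun x => f x + g x) a b.
Proof. intros Hf Hg. apply (ex_RInt_plus (V:=R_NormedModule)); auto. Qed.

Lemma ex_RInt_scalR (f : R -> R) a b c : ex_RInt f a b -> ex_RInt (fun x => c * f x) a b.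
Proof. intros Hf. apply (ex_RInt_scal (V:=R_NormedModule)); auto. Qed.

Lemma RInt_derR (f df : R -> R) a b :
  (forall x, Rmin a b <= x <= Rmax a b -> is_derive f x (df x)) ->
  (forall x, Rmin a b <= x <= Rmax a b -> continuous df x) ->
  RInt df a b = f b - f a.
Proof.
  intros H1 H2. apply (is_RInt_unique (V:=R_CompleteNormedModule)).
  apply (is_RInt_derive (V:=R_CompleteNormedModule)); auto.
Qed.

Definition Qj (j : nat) (f : R -> R) (t : R) : R :=
  RInt (fun s => s ^ j * f (t * s)) 0 1.

Definition K (f : R -> R) (r : R) : R := RInt (fun t => t * Qj 2 f t) 0 r.

Lemma Q_integrand_cont j f t : cont f -> forall s, continuous (fun s => s ^ j * f (t * s)) s.
Proof.
  intros Hf s. apply (@continuous_mult R_UniformSpace R_AbsRing (fun s => s ^ j) (fun s => f (t * s))).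
  - apply dcont. auto_derive. auto.
  - apply (continuous_comp (fun s => t * s) f).
    + apply dcont. auto_derive. auto.
    + apply Hf.
Qed.

Lemma Q_ex j f t : cont f -> ex_RInt (fun s => s ^ j * f (t * s)) 0 1.
Proof.
  intros Hf. apply exR_cont. intros; apply Q_integrand_cont; auto.
Qed.

Lemma Q_cont j f : cont f -> cont (Qj j f).
Proof.
  intros Hf t0. apply cont_eps. intros eps Heps.
  set (R0 := Rabs t0 + 1).
  assert (HU : uniform_continuity f (fun c => - R0 <= c <= R0)).
  { apply Heine. apply compact_P3. intros x _. apply continuity_pt_filterlim. apply Hf. }
  destruct (HU (mkposreal (eps/2) ltac:(lra))) as [[d Hd] Hdd]. simpl in Hdd.
  exists (Rmin d 1). split. apply Rmin_glb_lt; lra.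
  intros t Ht.
  assert (Hd1 : Rabs (t - t0) < d) by (eapply Rlt_le_trans; [exact Ht| apply Rmin_l]).
  assert (Ht1 : Rabs (t - t0) < 1) by (eapply Rlt_le_trans; [exact Ht| apply Rmin_r]).
  unfold Qj. rewrite <- RInt_minusR by (apply Q_ex; auto).
  apply Rle_lt_trans with ((1 - 0) * (eps/2)); [|lra].
  apply abs_RInt_le_const. lra.
  apply ex_RInt_minusR; apply Q_ex; auto.
  intros s Hs.
  replace (s ^ j * f (t * s) - s ^ j * f (t0 * s)) with (s ^ j * (f (t * s) - f (t0 * s))) by ring.
  rewrite Rabs_mult. rewrite <- (Rmult_1_l (eps/2)).
  apply Rmult_le_compat; try apply Rabs_pos.
  - rewrite <- RPow_abs. rewrite Rabs_right by lra. apply pow_le1. lra.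
  - assert (Hta : Rabs t <= R0).
    { unfold R0. replace t with (t0 + (t - t0)) by ring.
      eapply Rle_trans. apply Rabs_triang. lra. }
    assert (Ht0a : Rabs t0 <= R0) by (unfold R0; lra).
    apply Rlt_le. apply Hdd.
    + apply Rabs_le_between. rewrite Rabs_mult, (Rabs_right s) by lra.
      assert (0 <= Rabs t) by apply Rabs_pos. nra.
    + apply Rabs_le_between. rewrite Rabs_mult, (Rabs_right s) by lra.
      assert (0 <= Rabs t0) by apply Rabs_pos. nra.
    + rewrite <- Rmult_minus_distr_r. rewrite Rabs_mult. rewrite (Rabs_right s) by lra.
      apply Rle_lt_trans with (Rabs (t - t0)); [|exact Hd1].
      rewrite <- (Rmult_1_r (Rabs (t - t0))) at 2. apply Rmult_le_compat_l. apply Rabs_pos. lra.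
Qed.

Lemma cont_pt (f : R -> R) x : continuous f x -> continuity_pt f x.
Proof. intros H. apply continuity_pt_filterlim. exact H. Qed.

Lemma pt_cont (f : R -> R) x : continuity_pt f x -> continuous f x.
Proof. intros H. apply continuity_pt_filterlim. exact H. Qed.

Lemma K_integrand_cont f : cont f -> cont (fun t => t * Qj 2 f t).
Proof.
  intros Hf t. apply pt_cont. apply continuity_pt_mult.
  apply continuity_pt_id. apply cont_pt. apply Q_cont. auto.
Qed.

Lemma K_ex f a b : cont f -> ex_RInt (fun t => t * Qj 2 f t) a b.
Proof. intros Hf. apply exR_cont. intros; apply K_integrand_cont; auto. Qed.

Lemma K_deriv f r : cont f -> is_derive (K f) r (r * Qj 2 f r).
Proof.
  intros Hf. apply (is_derive_RInt (V:=R_NormedModule) (fun t => t * Qj 2 f t) (K f) 0 r).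
  - apply filter_forall. intros b. unfold K.
    apply (RInt_correct (V:=R_CompleteNormedModule)). apply K_ex; auto.
  - apply K_integrand_cont; auto.
Qed.

Lemma K_cont f : cont f -> cont (K f).
Proof. intros Hf r. apply dcont. eexists. apply K_deriv; auto. Qed.

Lemma K_0 f : K f 0 = 0.
Proof. unfold K. apply (RInt_point (V:=R_CompleteNormedModule)). Qed.

Lemma Derive_K f r : cont f -> Derive (K f) r = r * Qj 2 f r.
Proof. intros Hf. apply is_derive_unique. apply K_deriv; auto. Qed.

Lemma is_derive_lin (v u : R) : is_derive (fun z => v * z) u v.
Proof. auto_derive. auto. ring. Qed.

Lemma Q_deriv j f f' t : (forall x, is_derive f x (f' x)) -> cont f' ->
  is_derive (Qj j f) t (Qj (S j) f' t).
Proof.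
  intros Hd Hc.
  assert (Hcf : cont f) by (intros x; apply dcont; eexists; apply Hd).
  assert (HD : forall u v, Derive (fun z => v ^ j * f (z * v)) u = v ^ S j * f' (u * v)).
  { intros u v. apply is_derive_unique.
    apply (is_derive_ext (fun z => v ^ j * f (v * z))). intros; f_equal; f_equal; ring.
    replace (v ^ S j * f' (u * v)) with (v ^ j * (v * f' (v * u))) by (rewrite (Rmult_comm u); simpl; ring).
    apply (is_derive_scal (fun z => f (v * z))).
    apply (is_derive_comp f (fun z => v * z) u (f' (v*u)) v). apply Hd.
    apply is_derive_lin. }
  unfold Qj.
  replace (RInt (fun s => s ^ S j * f' (t * s)) 0 1) with
      (RInt (fun s => Derive (fun u => s ^ j * f (u * s)) t) 0 1).
  2:{ apply RInt_ext. intros x _. rewrite HD. reflexivity. }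
  apply (is_derive_ext (fun x0 => RInt (fun s => s ^ j * f (s * x0)) 0 1)).
  { intros x0. apply RInt_ext. intros; f_equal; f_equal; ring. }
  apply (is_derive_ext (fun x0 => RInt (fun s => s ^ j * f (x0 * s)) 0 1)).
  { intros x0. apply RInt_ext. intros; f_equal; f_equal; ring. }
  apply (is_derive_RInt_param (fun u s => s ^ j * f (u * s)) 0 1 t).
  - apply filter_forall. intros x0 s _. eexists. apply (is_derive_ext (fun z => s ^ j * f (s * z))).
    intros; f_equal; f_equal; ring.
    apply (is_derive_scal (fun z => f (s * z))).
    apply (is_derive_comp f (fun z => s * z) x0 (f' (s*x0)) s). apply Hd.
    apply is_derive_lin.
  - intros s _. apply (continuity_2d_pt_ext (fun u v => v ^ S j * f' (u * v))).
    { intros; rewrite HD; auto. }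
    apply continuity_2d_pt_mult.
    + apply (continuity_1d_2d_pt_comp (fun x => x ^ S j) (fun u v => v)).
      apply derivable_continuous_pt. apply derivable_pt_pow. apply continuity_2d_pt_id2.
    + apply (continuity_1d_2d_pt_comp f' (fun u v => u * v)). apply cont_pt; auto.
      apply continuity_2d_pt_mult. apply continuity_2d_pt_id1. apply continuity_2d_pt_id2.
  - apply filter_forall. intros y. apply Q_ex; auto.
Qed.

Lemma Q_subst j f t : cont f -> t ^ S j * Qj j f t = RInt (fun s => s ^ j * f s) 0 t.
Proof.
  intros Hf.
  assert (Hex : ex_RInt (fun s => s ^ j * f s) (t * 0 + 0) (t * 1 + 0)).
  { apply exR_cont. intros z _. pose proof (Q_integrand_cont j f 1 Hf z) as Hz.
    apply (continuous_ext (fun s => s ^ j * f (1 * s))). intros; rewrite Rmult_1_l; auto. apply Hz. }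
  pose proof (RInt_comp_lin (V:=R_CompleteNormedModule) (fun s => s ^ j * f s) t 0 0 1 Hex) as H.
  replace (t * 0 + 0) with 0 in H by ring. replace (t * 1 + 0) with t in H by ring.
  rewrite <- H. unfold Qj. rewrite <- RInt_scalR by (apply Q_ex; auto).
  apply RInt_ext. intros x _. unfold scal; simpl; unfold mult; simpl.
  rewrite Rplus_0_r, Rpow_mult_distr. simpl. ring.
Qed.

Lemma Q_ibp f f' t : (forall x, is_derive f x (f' x)) -> cont f' ->
  t * Qj 3 f' t = f t - 3 * Qj 2 f t.
Proof.
  intros Hd Hc.
  assert (Hcf : cont f) by (intros x; apply dcont; eexists; apply Hd).
  assert (H : RInt (fun s => 3 * (s ^ 2 * f (t * s)) + t * (s ^ 3 * f' (t * s))) 0 1 = f t).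
  { rewrite (RInt_derR (fun s => s ^ 3 * f (t * s))).
    - rewrite Rmult_1_r. simpl. ring.
    - intros x _. 
      apply (is_derive_ext (fun s => s ^ 3 * f (t * s))). auto.
      replace (3 * (x ^ 2 * f (t * x)) + t * (x ^ 3 * f' (t * x))) with
        ((INR 3 * x ^ 2) * f (t * x) + x ^ 3 * (t * f' (t * x))) by (simpl; ring).
      apply (is_derive_mult (fun s => s ^ 3) (fun s => f (t * s)) x).
      + auto_derive. auto. simpl; ring.
      + apply (is_derive_comp f (fun z => t * z) x (f' (t*x)) t). apply Hd.
        apply is_derive_lin.
      + intros; apply Rmult_comm.
    - intros x _. apply (@continuous_plus R_UniformSpace R_AbsRing R_NormedModule
        (fun s => 3 * (s ^ 2 * f (t * s))) (fun s => t * (s ^ 3 * f' (t * s)))).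
      + apply (@continuous_mult R_UniformSpace R_AbsRing (fun _ => 3)). apply continuous_const.
        apply Q_integrand_cont; auto.
      + apply (@continuous_mult R_UniformSpace R_AbsRing (fun _ => t)). apply continuous_const.
        apply Q_integrand_cont; auto. }
  rewrite RInt_plusR in H.
  2: apply ex_RInt_scalR; apply Q_ex; auto.
  2: apply ex_RInt_scalR; apply Q_ex; auto.
  rewrite !RInt_scalR in H by (apply Q_ex; auto).
  unfold Qj. lra.
Qed.

Lemma dminus (f g : R -> R) (x a b : R) : is_derive f x a -> is_derive g x b -> is_derive (fun y => f y - g y) x (a - b).
Proof. intros H1 H2. exact (is_derive_minus f g x a b H1 H2). Qed.
Lemma dplus (f g : R -> R) (x a b : R) : is_derive f x a -> is_derive g x b -> is_derive (fun y => f y + g y) x (a + b).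
Proof. intros H1 H2. exact (is_derive_plus f g x a b H1 H2). Qed.
Lemma dmult (f g : R -> R) (x a b : R) : is_derive f x a -> is_derive g x b -> is_derive (fun y => f y * g y) x (a * g x + f x * b).
Proof. intros H1 H2. exact (is_derive_mult f g x a b H1 H2 Rmult_comm). Qed.
Lemma dcomp (f g : R -> R) x a b : is_derive f (g x) a -> is_derive g x b -> is_derive (fun y => f (g y)) x (b * a).
Proof. intros H1 H2. exact (is_derive_comp f g x a b H1 H2). Qed.
Lemma dconst (c x : R) : is_derive (fun _ => c) x 0.
Proof. apply (is_derive_const c x). Qed.
Lemma did (x : R) : is_derive (fun y => y) x 1.
Proof. apply (is_derive_id x). Qed.
Lemma dscal (f : R -> R) (x c a : R) : is_derive f x a -> is_derive (fun y => c * f y) x (c * a).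
Proof. intros H. exact (is_derive_scal f x c a H). Qed.
Lemma deq (f : R -> R) (x a b : R) : a = b -> is_derive f x a -> is_derive f x b.
Proof. intros ->; auto. Qed.

Lemma const_on (g : R -> R) a b :
  (forall x, Rmin a b < x < Rmax a b -> is_derive g x 0) ->
  (forall x, Rmin a b <= x <= Rmax a b -> continuous g x) -> g b = g a.
Proof.
  intros Hd Hc. destruct (MVT_gen g a b (fun _ => 0)) as [c [_ Hc']].
  - intros x Hx. apply Hd. exact Hx.
  - intros x Hx. apply cont_pt. apply Hc. exact Hx.
  - lra.
Qed.

Lemma const_all (g : R -> R) : (forall x, is_derive g x 0) -> forall r, g r = g 0.
Proof.
  intros Hd r. apply const_on. intros; auto. intros; apply dcont; eexists; apply Hd.
Qed.

Definition evenf (f : R -> R) : Prop := forall r, f (- r) = f r.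

Lemma Q_even j f : evenf f -> evenf (Qj j f).
Proof.
  intros He t. unfold Qj. apply RInt_ext. intros x _.
  replace (- t * x) with (- (t * x)) by ring. rewrite He. reflexivity.
Qed.

Lemma K_even f : cont f -> evenf f -> evenf (K f).
Proof.
  intros Hc He.
  assert (H : forall r, (fun r => K f (- r) - K f r) r = (fun r => K f (- r) - K f r) 0).
  { apply const_all. intros x.
    apply (deq _ _ (- 1 * ((- x) * Qj 2 f (- x)) - x * Qj 2 f x)).
    rewrite (Q_even 2 f He x); ring.
    apply dminus. 2: apply K_deriv; auto.
    apply (dcomp (K f) (fun r => - r)). apply K_deriv; auto.
    apply (is_derive_ext (fun r => (-1) * r)). 2: apply is_derive_lin. intros t. lra. }
  intros r. specialize (H r). simpl in H. rewrite Ropp_0 in H. lra.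
Qed.

Lemma Q_plus j f g t : cont f -> cont g -> Qj j (fun s => f s + g s) t = Qj j f t + Qj j g t.
Proof.
  intros Hf Hg. unfold Qj. rewrite <- RInt_plusR by (apply Q_ex; auto).
  apply RInt_ext. intros; rring.
Qed.

Lemma Q_scal j f c t : cont f -> Qj j (fun s => c * f s) t = c * Qj j f t.
Proof.
  intros Hf. unfold Qj. rewrite <- RInt_scalR by (apply Q_ex; auto).
  apply RInt_ext. intros; rring.
Qed.

Lemma cont_plus f g : cont f -> cont g -> cont (fun s => f s + g s).
Proof. intros Hf Hg x. apply pt_cont. apply continuity_pt_plus; apply cont_pt; auto. Qed.
Lemma cont_scal f c : cont f -> cont (fun s => c * f s).
Proof. intros Hf x. apply pt_cont. apply continuity_pt_mult. apply continuity_pt_const. intros a b; auto. apply cont_pt; auto. Qed.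
Lemma cont_const c : cont (fun _ => c).
Proof. intros x. apply continuous_const. Qed.
Lemma cont_poly (n : nat) : cont (fun s => s ^ n).
Proof. intros x. apply dcont. auto_derive. auto. Qed.

Lemma K_plus f g r : cont f -> cont g -> K (fun s => f s + g s) r = K f r + K g r.
Proof.
  intros Hf Hg. unfold K. rewrite <- RInt_plusR by (apply K_ex; auto).
  apply RInt_ext. intros; rewrite Q_plus; auto; rring.
Qed.

Lemma K_scal f c r : cont f -> K (fun s => c * f s) r = c * K f r.
Proof.
  intros Hf. unfold K. rewrite <- RInt_scalR by (apply K_ex; auto).
  apply RInt_ext. intros; rewrite Q_scal; auto; rring.
Qed.

Lemma K_ext f g r : (forall s, f s = g s) -> K f r = K g r.
Proof.
  intros H. unfold K, Qj. apply RInt_ext. intros. f_equal. apply RInt_ext. intros. rewrite H. auto.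
Qed.

Lemma Q_mono_pos j f g t : cont f -> cont g -> 0 < t ->
  (forall s, 0 <= s < t -> f s <= g s) -> Qj j f t <= Qj j g t.
Proof.
  intros Hf Hg Ht H. unfold Qj. apply RInt_le. lra. apply Q_ex; auto. apply Q_ex; auto.
  intros x Hx. apply Rmult_le_compat_l. apply pow_le; lra.
  apply H. split. nra. nra.
Qed.

Lemma K_mono f g r : cont f -> cont g -> 0 <= r ->
  (forall s, 0 <= s < r -> f s <= g s) -> K f r <= K g r.
Proof.
  intros Hf Hg Hr H. unfold K. apply RInt_le. lra. apply K_ex; auto. apply K_ex; auto.
  intros x Hx. apply Rmult_le_compat_l. lra. apply Q_mono_pos; auto. lra.
  intros s Hs. apply H. lra.
Qed.

Lemma K_zero r : K (fun _ => 0) r = 0.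
Proof.
  rewrite (K_ext _ (fun s => 0 * 0)) by (intros; ring).
  rewrite K_scal by apply cont_const. ring.
Qed.

Lemma K_nonneg f r : cont f -> 0 <= r -> (forall s, 0 <= s < r -> 0 <= f s) -> 0 <= K f r.
Proof.
  intros Hf Hr H. rewrite <- (K_zero r). apply K_mono; auto. apply cont_const.
Qed.

Lemma K_nonpos f r : cont f -> 0 <= r -> (forall s, 0 <= s < r -> f s <= 0) -> K f r <= 0.
Proof.
  intros Hf Hr H. rewrite <- (K_zero r). apply K_mono; auto. apply cont_const.
Qed.

Lemma Q_pow j n t : Qj j (fun s => s ^ n) t = t ^ n / INR (j + n + 1).
Proof.
  unfold Qj.
  rewrite (RInt_ext _ (fun s => t ^ n * s ^ (j + n))).
  2:{ intros x _. rewrite Rpow_mult_distr, pow_add. rring. }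
  rewrite RInt_scalR by (apply exR_cont; intros; apply cont_poly).
  rewrite (RInt_derR (fun s => s ^ (j + n + 1) / INR (j + n + 1))).
  - rewrite pow1, pow_i by lia. field. apply not_0_INR. lia.
  - intros x _. auto_derive. auto. rewrite Nat.add_1_r. simpl pred. field. apply not_0_INR. lia.
  - intros; apply cont_poly.
Qed.

Lemma K_pow n r : K (fun s => s ^ n) r = r ^ (n + 2) / (INR (n + 3) * INR (n + 2)).
Proof.
  unfold K. rewrite (RInt_ext _ (fun t => t ^ (n + 1) / INR (n + 3))).
  2:{ intros x _. rewrite Q_pow. replace (2 + n + 1)%nat with (n + 3)%nat by lia.
      rewrite pow_add. simpl. field. apply not_0_INR. lia. }
  rewrite (RInt_derR (fun s => s ^ (n + 2) / (INR (n + 3) * INR (n + 2)))).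
  - rewrite pow_i by lia. field. split; apply not_0_INR; lia.
  - intros x _. auto_derive. auto. replace (pred (n + 2)) with (n + 1)%nat by lia.
    field. split; apply not_0_INR; lia.
  - intros x _. apply dcont. auto_derive. auto.
Qed.

Lemma K_const c r : K (fun _ => c) r = c * r ^ 2 / 6.
Proof.
  rewrite (K_ext _ (fun s => c * s ^ 0)) by (intros; simpl; ring).
  rewrite K_scal by apply cont_poly. rewrite K_pow. simpl. field.
Qed.

Lemma loc_pos (x : R) : 0 < x -> locally x (fun y => 0 < y).
Proof.
  intros Hx. exists (mkposreal x Hx). intros y Hy. simpl in Hy.
  unfold ball in Hy; simpl in Hy; unfold AbsRing_ball, abs, minus, plus, opp in Hy; simpl in Hy.
  apply Rabs_lt_between in Hy. lra.
Qed.

Lemma RInt_der_fun (g : R -> R) x : cont g -> is_derive (fun t => RInt g 0 t) x (g x).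
Proof.
  intros Hg. apply (is_derive_RInt (V:=R_NormedModule) g (fun t => RInt g 0 t) 0 x).
  apply filter_forall. intros b. apply (RInt_correct (V:=R_CompleteNormedModule)).
  apply exR_cont. intros; auto. apply Hg.
Qed.

Lemma cont_mult f g : cont f -> cont g -> cont (fun s => f s * g s).
Proof. intros Hf Hg x. apply pt_cont. apply continuity_pt_mult; apply cont_pt; auto. Qed.

Lemma cont_id : cont (fun s => s).
Proof. intros x. apply continuous_id. Qed.

Lemma K_kernel f r : cont f -> 0 < r ->
  K f r = RInt (fun s => s * f s) 0 r - / r * RInt (fun s => s ^ 2 * f s) 0 r.
Proof.
  intros Hf Hr.
  set (A := fun t => RInt (fun s => s * f s) 0 t).
  set (B := fun t => RInt (fun s => s ^ 2 * f s) 0 t).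
  assert (HcA : cont (fun s => s * f s)) by (apply cont_mult; [apply cont_id| auto]).
  assert (HcB : cont (fun s => s ^ 2 * f s)) by (apply cont_mult; [apply cont_poly| auto]).
  set (E := fun t => A t - t ^ 2 * Qj 2 f t).
  assert (HBQ : forall t, B t = t ^ 3 * Qj 2 f t) by (intros; unfold B; rewrite <- Q_subst; auto).
  assert (HE : forall t, 0 < t -> is_derive E t (t * Qj 2 f t)).
  { intros t Ht.
    apply (is_derive_ext_loc (fun t => A t - B t * / t)).
    { apply (filter_imp (fun y => 0 < y)). 2: apply loc_pos; auto.
      intros y Hy. unfold E. rewrite HBQ. rfield. lra. }
    apply (deq _ _ (t * f t - ((t ^ 2 * f t) * / t + B t * (- 1 / t ^ 2)))).
    { rewrite HBQ. field. lra. }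
    apply dminus. apply (RInt_der_fun (fun s => s * f s)); auto.
    apply dmult. apply (RInt_der_fun (fun s => s ^ 2 * f s)); auto.
    apply (deq _ _ (- 1 / t ^ 2)). reflexivity.
    apply (is_derive_ext (fun y => / y)). auto.
    apply (deq _ _ (- 1 / t ^ 2)). reflexivity.
    pose proof (is_derive_inv (fun y => y) t 1 (did t)) as Hi. simpl in Hi.
    apply (deq _ _ (- 1 / (t * (t * 1)))). simpl; reflexivity. apply Hi. lra. }
  assert (Hc : K f r - E r = K f 0 - E 0).
  { apply (const_on (fun t => K f t - E t) 0 r).
    - intros x Hx. rewrite Rmin_left, Rmax_right in Hx by lra.
      apply (deq _ _ (x * Qj 2 f x - x * Qj 2 f x)). ring.
      apply dminus. apply K_deriv; auto. apply HE. lra.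
    - intros x _. apply pt_cont. apply continuity_pt_minus. apply cont_pt, K_cont; auto.
      apply continuity_pt_minus. apply cont_pt. apply dcont. eexists. apply (RInt_der_fun (fun s => s * f s)); auto.
      apply continuity_pt_mult. apply cont_pt, cont_poly. apply cont_pt, Q_cont; auto. }
  rewrite K_0 in Hc. unfold E, A in Hc. rewrite (RInt_point (V:=R_CompleteNormedModule)) in Hc.
  fold (A r) in Hc. fold (B r). rewrite HBQ.
  replace (/ r * (r ^ 3 * Qj 2 f r)) with (r ^ 2 * Qj 2 f r) by (field; lra).
  unfold zero in Hc; simpl in Hc. lra.
Qed.

Lemma K_kernel2 f r : cont f -> 0 < r ->
  K f r = RInt (fun s => s * (1 - s / r) * f s) 0 r.
Proof.
  intros Hf Hr. rewrite K_kernel; auto.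
  assert (HcA : cont (fun s => s * f s)) by (apply cont_mult; [apply cont_id| auto]).
  assert (HcB : cont (fun s => s ^ 2 * f s)) by (apply cont_mult; [apply cont_poly| auto]).
  rewrite <- RInt_scalR by (apply exR_cont; intros; auto).
  rewrite <- RInt_minusR by (try apply ex_RInt_scalR; apply exR_cont; intros; auto).
  apply RInt_ext. intros x _. rfield. lra.
Qed.

Lemma Q_bound j f t Bd : cont f -> (forall s, Rabs s <= Rabs t -> Rabs (f s) <= Bd) -> Rabs (Qj j f t) <= Bd.
Proof.
  intros Hf H. unfold Qj. replace Bd with ((1 - 0) * Bd) by ring.
  apply abs_RInt_le_const. lra. apply Q_ex; auto.
  intros s Hs. rewrite Rabs_mult. rewrite <- (Rmult_1_l Bd).
  apply Rmult_le_compat; try apply Rabs_pos.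
  rewrite <- RPow_abs, Rabs_right by lra. apply pow_le1; lra.
  apply H. rewrite Rabs_mult, (Rabs_right s) by lra.
  assert (0 <= Rabs t) by apply Rabs_pos. nra.
Qed.

Lemma K_lip f Rr Bd : cont f -> (forall s, Rabs s <= Rr -> Rabs (f s) <= Bd) ->
  forall x y, Rabs x <= Rr -> Rabs y <= Rr -> Rabs (K f x - K f y) <= Rr * Bd * Rabs (x - y).
Proof.
  intros Hf H x y Hx Hy.
  destruct (MVT_gen (K f) y x (fun t => t * Qj 2 f t)) as [c [Hc Heq]].
  - intros; apply K_deriv; auto.
  - intros; apply cont_pt, K_cont; auto.
  - rewrite Heq. rewrite Rabs_mult. apply Rmult_le_compat_r. apply Rabs_pos.
    assert (Hcr : Rabs c <= Rr).
    { apply Rabs_le_between. apply Rabs_le_between in Hx. apply Rabs_le_between in Hy.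
      destruct Hc as [Hc1 Hc2].
      split. eapply Rle_trans; [|apply Hc1]. apply Rmin_glb; lra.
      eapply Rle_trans; [apply Hc2|]. apply Rmax_lub; lra. }
    rewrite Rabs_mult. apply Rmult_le_compat; try apply Rabs_pos. auto.
    apply Q_bound; auto. intros s Hs. apply H. lra.
Qed.

Lemma K_bnd f Rr Bd : cont f -> (forall s, Rabs s <= Rr -> Rabs (f s) <= Bd) ->
  forall x, Rabs x <= Rr -> Rabs (K f x) <= Rr * Bd * Rr.
Proof.
  intros Hf H x Hx.
  assert (0 <= Rr) by (eapply Rle_trans; [apply Rabs_pos| exact Hx]).
  pose proof (K_lip f Rr Bd Hf H x 0 Hx) as Hl. rewrite K_0, !Rminus_0_r in Hl.
  rewrite Rabs_R0 in Hl. specialize (Hl H0).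
  assert (0 <= Bd) by (eapply Rle_trans; [apply Rabs_pos| apply (H 0); rewrite Rabs_R0; auto]).
  eapply Rle_trans. apply Hl. apply Rmult_le_compat_l. nra. auto.
Qed.

Lemma Derive_cK c f x : cont f -> Derive (fun y => c + K f y) x = x * Qj 2 f x.
Proof.
  intros Hf. apply is_derive_unique.
  apply (deq _ _ (0 + x * Qj 2 f x)). ring. apply dplus. apply dconst. apply K_deriv; auto.
Qed.

Lemma radLap_K c f f' r : (forall x, is_derive f x (f' x)) -> cont f' -> r <> 0 ->
  radLap (fun y => c + K f y) r = f r.
Proof.
  intros Hd Hc' Hr.
  assert (Hf : cont f) by (intros x; apply dcont; eexists; apply Hd).
  unfold radLap. simpl.
  rewrite (Derive_ext (fun x => Derive (fun y => c + K f y) x) (fun x => x * Qj 2 f x))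
    by (intros; apply Derive_cK; auto).
  rewrite Derive_cK by auto.
  assert (HD : Derive (fun x : R => x * Qj 2 f x) r = 1 * Qj 2 f r + r * Qj 3 f' r).
  { apply is_derive_unique. apply dmult. apply did. apply Q_deriv; auto. }
  rewrite HD. rewrite (Q_ibp f f' r Hd Hc'). field. auto.
Qed.

Fixpoint Cn (n : nat) (f : R -> R) : Prop :=
  match n with
  | O => cont f
  | S m => exists g, (forall x, is_derive f x (g x)) /\ Cn m g
  end.

Lemma Cn_cont n f : Cn n f -> cont f.
Proof.
  destruct n; simpl; auto. intros [g [Hd _]] x. apply dcont. eexists; apply Hd.
Qed.

Lemma Cn_mono n f : Cn (S n) f -> Cn n f.
Proof.
  revert f. induction n; intros f H.
  - apply Cn_cont in H. exact H.
  - destruct H as [g [Hd Hg]]. exists g. split; auto.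
Qed.

Lemma Cn_ext n f g : (forall x, f x = g x) -> Cn n f -> Cn n g.
Proof.
  destruct n; simpl.
  - intros H Hf x. apply (continuous_ext f); auto.
  - intros H [h [Hd Hh]]. exists h. split; auto. intros x. apply (is_derive_ext f); auto.
Qed.

Lemma Cn_const n c : Cn n (fun _ => c).
Proof.
  destruct n; simpl. apply cont_const.
  exists (fun _ => 0). split. intros; apply dconst.
  induction n; simpl. apply cont_const. exists (fun _ => 0). split; auto. intros; apply dconst.
Qed.

Lemma Cn_plus n : forall f g, Cn n f -> Cn n g -> Cn n (fun x => f x + g x).
Proof.
  induction n; simpl; intros f g Hf Hg.
  - apply cont_plus; auto.
  - destruct Hf as [f' [Hf Hf']]. destruct Hg as [g' [Hg Hg']].
    exists (fun x => f' x + g' x). split; auto. intros; apply dplus; auto.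
Qed.

Lemma Cn_mult n : forall f g, Cn n f -> Cn n g -> Cn n (fun x => f x * g x).
Proof.
  induction n; intros f g Hf Hg.
  - apply cont_mult; auto.
  - pose proof (Cn_mono _ _ Hf) as Hf0. pose proof (Cn_mono _ _ Hg) as Hg0.
    destruct Hf as [f' [Hf Hf']]. destruct Hg as [g' [Hg Hg']].
    exists (fun x => f' x * g x + f x * g' x). split.
    + intros; apply dmult; auto.
    + apply Cn_plus; apply IHn; auto.
Qed.

Lemma Cn_id n : Cn n (fun x => x).
Proof.
  destruct n; simpl. apply cont_id.
  exists (fun _ => 1). split. intros; apply did. apply Cn_const.
Qed.

Lemma Cn_scal n c f : Cn n f -> Cn n (fun x => c * f x).
Proof. intros H. apply Cn_mult; auto. apply Cn_const. Qed.

Lemma Cn_inv n : forall f, (forall x, f x <> 0) -> Cn n f -> Cn n (fun x => / f x).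
Proof.
  induction n; intros f Hnz Hf.
  - intros x. apply pt_cont. apply continuity_pt_inv. apply cont_pt. apply Hf. auto.
  - pose proof (Cn_mono _ _ Hf) as Hf0.
    destruct Hf as [f' [Hd Hf']].
    exists (fun x => -1 * (f' x * (/ f x * / f x))). split.
    + intros x. apply (deq _ _ (- f' x / f x ^ 2)). field. auto.
      apply is_derive_inv; auto.
    + apply Cn_scal. apply Cn_mult; auto. apply Cn_mult; apply IHn; auto.
Qed.

Lemma Cn_Q n : forall f j, Cn n f -> Cn n (Qj j f).
Proof.
  induction n; intros f j Hf.
  - apply Q_cont; auto.
  - destruct Hf as [f' [Hd Hf']].
    exists (Qj (S j) f'). split.
    + intros; apply Q_deriv; auto. apply Cn_cont with n; auto.
    + apply IHn; auto.
Qed.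

Lemma Cn_K n f : Cn n f -> Cn (S n) (K f).
Proof.
  intros Hf. exists (fun t => t * Qj 2 f t). split.
  - intros; apply K_deriv. apply Cn_cont with n; auto.
  - apply Cn_mult. apply Cn_id. apply Cn_Q; auto.
Qed.

Lemma Cn_smooth f : (forall n, Cn n f) -> smooth f.
Proof.
  intros H n x. destruct n. simpl; auto.
  specialize (H (S n)). revert f H x. induction n; intros f H x.
  - destruct H as [g [Hd _]]. simpl. eexists. apply Hd.
  - destruct H as [g [Hd Hg]].
    assert (Hfg : forall y, Derive_n f (S n) y = Derive_n g n y).
    { intros y. change (Derive_n f (S n) y = Derive_n g n y).
      replace (S n) with (n + 1)%nat by lia. rewrite <- (Derive_n_comp f n 1).
      apply Derive_n_ext. intros z. simpl. apply is_derive_unique. apply Hd. 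
      }
    simpl ex_derive_n. apply (ex_derive_ext (Derive_n g n)). intros t; symmetry; apply Hfg.
    specialize (IHn g Hg x). simpl in IHn. exact IHn.
Qed.

Definition hu (u : R -> R) : R -> R := fun s => - / (u s ^ 3).

Definition IntSol (k eps : R) (u v w : R -> R) : Prop :=
  cont u /\ cont v /\ cont w /\ evenf u /\ evenf v /\ evenf w /\ (forall r, 0 < u r) /\
  (forall r, w r = 1 + K (hu u) r) /\
  (forall r, v r = - eps + K w r) /\
  (forall r, u r = k + K v r).

Lemma hu_even u : evenf u -> evenf (hu u).
Proof. intros He r. unfold hu. rewrite He. auto. Qed.

Lemma Cn_hu n u : (forall r, 0 < u r) -> Cn n u -> Cn n (hu u).
Proof.
  intros Hp Hu. unfold hu.
  apply (Cn_ext n (fun s => -1 * / (u s * (u s * u s)))).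
  { intros; simpl; field. assert (0 < u x) by auto. lra. }
  apply Cn_scal. apply Cn_inv.
  { intros x. assert (0 < u x) by auto. apply Rmult_integral_contrapositive; split; [lra|].
    apply Rmult_integral_contrapositive; split; lra. }
  apply Cn_mult; auto. apply Cn_mult; auto.
Qed.

Lemma hu_cont u : cont u -> (forall r, 0 < r -> True) -> (forall r, 0 < u r) -> cont (hu u).
Proof. intros Hc _ Hp. apply (Cn_hu 0); auto. Qed.

Lemma radLap_ext f g r : (forall x, f x = g x) -> radLap f r = radLap g r.
Proof.
  intros H. unfold radLap. rewrite (Derive_ext f g) by auto.
  rewrite (Derive_n_ext f g) by auto. auto.
Qed.

Lemma IntSol_reg k eps u v w : IntSol k eps u v w -> has_pos_entire_radial_sol k eps.
Proof.
  intros (Hcu & Hcv & Hcw & Heu & Hev & Hew & Hp & Hw & Hv & Hu).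
  assert (HC : forall n, Cn n u /\ Cn n v /\ Cn n w).
  { induction n. simpl; auto.
    destruct IHn as (Hu' & Hv' & Hw').
    split; [|split].
    - apply (Cn_ext _ (fun r => k + K v r)). intros; rewrite Hu; auto.
      apply Cn_plus. apply Cn_const. apply Cn_K; auto.
    - apply (Cn_ext _ (fun r => - eps + K w r)). intros; rewrite Hv; auto.
      apply Cn_plus. apply Cn_const. apply Cn_K; auto.
    - apply (Cn_ext _ (fun r => 1 + K (hu u) r)). intros; rewrite Hw; auto.
      apply Cn_plus. apply Cn_const. apply Cn_K; auto. apply Cn_hu; auto. }
  assert (C1 : forall f, Cn 1 f -> exists f', (forall x, is_derive f x (f' x)) /\ cont f').
  { intros f [f' [H1 H2]]. exists f'. auto. }
  exists u, v, w.
  split; [split; [apply Cn_smooth; intros n; apply HC| exact Heu]|].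
  split; [split; [apply Cn_smooth; intros n; apply HC| exact Hev]|].
  split; [split; [apply Cn_smooth; intros n; apply HC| exact Hew]|].
  split; [exact Hp|].
  split.
  { intros r Hr. rewrite (radLap_ext u (fun y => k + K v y)) by auto.
    destruct (C1 v) as [v' [Hd Hc]]. apply HC.
    apply radLap_K with v'; auto. lra. }
  split.
  { intros r Hr. rewrite (radLap_ext v (fun y => - eps + K w y)) by auto.
    destruct (C1 w) as [w' [Hd Hc]]. apply HC.
    apply radLap_K with w'; auto. lra. }
  split.
  { intros r Hr. rewrite (radLap_ext w (fun y => 1 + K (hu u) y)) by auto.
    destruct (C1 (hu u)) as [h' [Hd Hc]]. apply Cn_hu; auto. apply HC.
    rewrite (radLap_K 1 (hu u) h'); auto. lra. }
  split. rewrite Hu, K_0; ring.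
  split. rewrite Hv, K_0; ring.
  split. rewrite Hw, K_0; ring.
  split. rewrite (Derive_ext u (fun y => k + K v y)) by auto. rewrite Derive_cK; auto. ring.
  split. rewrite (Derive_ext v (fun y => - eps + K w y)) by auto. rewrite Derive_cK; auto. ring.
  rewrite (Derive_ext w (fun y => 1 + K (hu u) y)) by auto. rewrite Derive_cK. ring.
  apply hu_cont; auto.
Qed.

Lemma conv1 (w h : R -> R) :
  smooth w -> evenf w -> cont h -> evenf h ->
  (forall r, 0 < r -> radLap w r = h r) -> Derive w 0 = 0 ->
  forall r, w r = w 0 + K h r.
Proof.
  intros Hs Hew Hch Heh Hrad Hd0.
  assert (Hd1 : forall x, ex_derive w x) by (intros x; exact (Hs 1%nat x)).
  assert (Hd2 : forall x, ex_derive (Derive w) x).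
  { intros x. pose proof (Hs 2%nat x) as H. simpl in H.
    apply (ex_derive_ext (Derive (fun x => w x))). intros; apply Derive_ext; auto. exact H. }
  assert (Hcd : cont (Derive w)) by (intros x; apply dcont; auto).
  assert (Hcw : cont w) by (intros x; apply dcont; auto).
  assert (HcB : cont (fun s => s ^ 2 * h s)) by (apply cont_mult; [apply cont_poly| auto]).
  assert (Hw' : forall r, 0 <= r -> Derive w r = r * Qj 2 h r).
  { intros r Hr. destruct (Req_dec r 0) as [->|Hne]. rewrite Hd0; ring.
    set (psi := fun t => t ^ 2 * Derive w t - RInt (fun s => s ^ 2 * h s) 0 t).
    assert (Hpsi : psi r = psi 0).
    { apply const_on.
      - intros x Hx. rewrite Rmin_left, Rmax_right in Hx by lra.
        apply (deq _ _ ((2 * x * Derive w x + x ^ 2 * Derive (Derive w) x) - x ^ 2 * h x)).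
        { rewrite <- (Hrad x) by lra. unfold radLap. simpl.
          replace (Derive (fun x0 : R => Derive (fun x1 : R => w x1) x0) x) with (Derive (Derive w) x) by reflexivity. field. lra. }
        apply dminus. 2: apply (RInt_der_fun (fun s => s ^ 2 * h s)); auto.
        apply (deq _ _ ((2 * x) * Derive w x + x ^ 2 * Derive (Derive w) x)). ring.
        apply dmult. auto_derive; auto; ring. apply Derive_correct; auto.
      - intros x _. apply pt_cont. apply continuity_pt_minus.
        apply continuity_pt_mult. apply cont_pt, cont_poly. apply cont_pt, Hcd.
        apply cont_pt, dcont. eexists. apply (RInt_der_fun (fun s => s ^ 2 * h s)); auto. }
    unfold psi in Hpsi. rewrite (RInt_point (V:=R_CompleteNormedModule)) in Hpsi.
    rewrite <- Q_subst in Hpsi by auto. unfold zero in Hpsi; simpl in Hpsi.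
    apply Rmult_eq_reg_l with (r ^ 2). 2: apply pow_nonzero; auto.
    simpl in *. lra. }
  assert (Hpos : forall r, 0 <= r -> w r = w 0 + K h r).
  { intros r Hr. destruct (Req_dec r 0) as [->|Hne]. rewrite K_0; ring.
    assert (H : (fun t => w t - K h t) r = (fun t => w t - K h t) 0).
    { apply (const_on (fun t => w t - K h t) 0 r).
      - intros x Hx. rewrite Rmin_left, Rmax_right in Hx by lra.
        apply (deq _ _ (Derive w x - x * Qj 2 h x)). rewrite Hw'; [ring| lra].
        apply dminus. apply Derive_correct; auto. apply K_deriv; auto.
      - intros x _. apply pt_cont. apply continuity_pt_minus; apply cont_pt; auto. apply K_cont; auto. }
    simpl in H. rewrite K_0 in H. lra. }
  intros r. destruct (Rle_dec 0 r). apply Hpos; auto.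
  rewrite <- Hew, <- (K_even h Hch Heh r). apply Hpos. lra.
Qed.

Lemma sol_IntSol k eps : has_pos_entire_radial_sol k eps -> exists u v w, IntSol k eps u v w.
Proof.
  intros (u & v & w & [Hsu Heu] & [Hsv Hev] & [Hsw Hew] & Hp & Hu & Hv & Hw & Hu0 & Hv0 & Hw0 & Hdu & Hdv & Hdw).
  assert (Hc : forall f, smooth f -> cont f) by (intros f Hf x; apply dcont; exact (Hf 1%nat x)).
  exists u, v, w.
  assert (Hcu : cont u) by auto. assert (Hcv : cont v) by auto. assert (Hcw : cont w) by auto.
  repeat split; auto.
  - intros r. rewrite <- Hw0. apply conv1; auto. apply hu_cont; auto. apply hu_even; auto.
  - intros r. rewrite <- Hv0. apply conv1; auto.
  - intros r. rewrite <- Hu0. apply conv1; auto.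
Qed.

Lemma K_quad a b r : K (fun s => a + b * s ^ 2) r = a * r ^ 2 / 6 + b * r ^ 4 / 20.
Proof.
  rewrite K_plus by (try apply cont_const; apply cont_scal, cont_poly).
  rewrite K_const, K_scal by apply cont_poly. rewrite K_pow. simpl. field.
Qed.

Lemma K_quart a b r : K (fun s => a * s ^ 2 + b * s ^ 4) r = a * r ^ 4 / 20 + b * r ^ 6 / 42.
Proof.
  rewrite K_plus by (apply cont_scal, cont_poly).
  rewrite !K_scal by apply cont_poly. rewrite !K_pow. simpl. field.
Qed.

Lemma cont_quad a b : cont (fun s => a + b * s ^ 2).
Proof. apply cont_plus. apply cont_const. apply cont_scal, cont_poly. Qed.

Lemma hu_neg u s : (forall r, 0 < u r) -> hu u s < 0.
Proof.
  intros Hp. unfold hu. assert (0 < u s) by auto.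
  assert (0 < u s ^ 3) by (apply pow_lt; auto). 
  assert (0 < / u s ^ 3) by (apply Rinv_0_lt_compat; auto). lra.
Qed.


Lemma sol_w_le1 (k eps : R) (u v w : R -> R) (Hs : IntSol k eps u v w) r : 0 <= r -> w r <= 1.
Proof.
  pose proof Hs as (Hcu & Hcv & Hcw & Heu & Hev & Hew & Hp & Hw & Hv & Hu).
  intros Hr. rewrite Hw. assert (K (hu u) r <= 0). apply K_nonpos; auto.
  apply hu_cont; auto. intros; apply Rlt_le, hu_neg; auto. lra.
Qed.

Lemma sol_v_le (k eps : R) (u v w : R -> R) (Hs : IntSol k eps u v w) r : 0 <= r -> v r <= - eps + r ^ 2 / 6.
Proof.
  pose proof Hs as (Hcu & Hcv & Hcw & Heu & Hev & Hew & Hp & Hw & Hv & Hu).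
  intros Hr. rewrite Hv. replace (- eps + r ^ 2 / 6) with (- eps + K (fun _ => 1) r) by (rewrite K_const; field).
  assert (K w r <= K (fun _ => 1) r). apply K_mono; auto. apply cont_const.
  intros s Hs'. apply (sol_w_le1 k eps u v w Hs). lra. lra.
Qed.

Lemma sol_u_le (k eps : R) (u v w : R -> R) (Hs : IntSol k eps u v w) r : 0 <= r -> u r <= k - eps * r ^ 2 / 6 + r ^ 4 / 120.
Proof.
  pose proof Hs as (Hcu & Hcv & Hcw & Heu & Hev & Hew & Hp & Hw & Hv & Hu).
  intros Hr. rewrite Hu.
  assert (K v r <= K (fun s => - eps + / 6 * s ^ 2) r).
  { apply K_mono; auto. apply cont_quad. intros s Hs'. 
    replace (- eps + / 6 * s ^ 2) with (- eps + s ^ 2 / 6) by field. apply (sol_v_le k eps u v w Hs). lra. }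
  rewrite K_quad in H. lra.
Qed.

Lemma sol_eps_bound (k eps : R) (u v w : R -> R) (Hs : IntSol k eps u v w) (Heps : 0 < eps) : eps * eps < 6 * k / 5.
Proof.
  pose proof Hs as (Hcu & Hcv & Hcw & Heu & Hev & Hew & Hp & Hw & Hv & Hu).
  set (r := sqrt (10 * eps)).
  assert (Hr2 : r ^ 2 = 10 * eps) by (unfold r; rewrite <- Rsqr_pow2, Rsqr_sqrt; lra).
  assert (Hr : 0 <= r) by apply sqrt_pos.
  pose proof (sol_u_le k eps u v w Hs r Hr). pose proof (Hp r).
  replace (r ^ 4) with ((r ^ 2) ^ 2) in H by ring. rewrite Hr2 in H. nra.
Qed.

Lemma Q_zero j t : Qj j (fun _ => 0) t = 0.
Proof.
  unfold Qj. rewrite (RInt_ext _ (fun _ => 0)) by (intros; rring). rewrite RInt_constR. ring.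
Qed.

Lemma sol_w_decr (k eps : R) (u v w : R -> R) (Hs : IntSol k eps u v w) a b : 0 <= a -> a <= b -> w b <= w a.
Proof.
  pose proof Hs as (Hcu & Hcv & Hcw & Heu & Hev & Hew & Hp & Hw & Hv & Hu).
  intros Ha Hab.
  assert (Hch : cont (hu u)) by (apply hu_cont; auto).
  destruct (MVT_gen (fun r => 1 + K (hu u) r) a b (fun t => 0 + t * Qj 2 (hu u) t)) as [c [Hc Heq]].
  - intros; apply dplus. apply dconst. apply K_deriv; auto.
  - intros; apply cont_pt. apply cont_plus. apply cont_const. apply K_cont; auto.
  - rewrite !Hw. rewrite Rmin_left, Rmax_right in Hc by lra.
    assert (c * Qj 2 (hu u) c <= 0).
    { destruct (Req_dec c 0) as [->|Hne]. lra.
      assert (Qj 2 (hu u) c <= 0). rewrite <- (Q_zero 2 c). apply Q_mono_pos; auto.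
      apply cont_const. lra. intros; apply Rlt_le, hu_neg; auto. nra. }
    assert (0 <= b - a) by lra. nra.
Qed.

Lemma sol_u_incr_bound (k eps : R) (u v w : R -> R) (Hs : IntSol k eps u v w) (Heps : 0 < eps) R0 s C : 0 <= R0 -> R0 <= s -> s ^ 3 / 30 <= C -> u s <= u R0 + C * (s - R0).
Proof.
  pose proof Hs as (Hcu & Hcv & Hcw & Heu & Hev & Hew & Hp & Hw & Hv & Hu).
  intros H0 Hs' HC.
  destruct (MVT_gen (fun r => k + K v r) R0 s (fun t => 0 + t * Qj 2 v t)) as [c [Hc Heq]].
  - intros; apply dplus. apply dconst. apply K_deriv; auto.
  - intros; apply cont_pt. apply cont_plus. apply cont_const. apply K_cont; auto.
  - rewrite !Hu. rewrite Rmin_left, Rmax_right in Hc by lra.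
    assert (c * Qj 2 v c <= C).
    { destruct (Req_dec c 0) as [->|Hne].
      - assert (0 <= C). eapply Rle_trans; [|apply HC]. apply Rmult_le_pos; [apply pow_le|]; lra. lra.
      - assert (Qj 2 v c <= Qj 2 (fun s => / 6 * s ^ 2) c).
        { apply Q_mono_pos; auto. apply cont_scal, cont_poly. lra.
          intros y Hy. pose proof (sol_v_le k eps u v w Hs y (proj1 Hy)). lra. }
        rewrite Q_scal, Q_pow in H by apply cont_poly. simpl INR in H.
        assert (c * (/ 6 * (c ^ 2 / (1 + 1 + 1 + 1 + 1))) <= s ^ 3 / 30).
        { simpl. assert (c ^ 3 <= s ^ 3) by (apply pow_incr; lra). simpl in H1. nra. }
        assert (0 < c) by lra. nra. }
    assert (0 <= s - R0) by lra. nra.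
Qed.


Definition Csol (R : R) := 1 + (R + 3) ^ 3 / 30.
Definition eta0 (k R : R) := / (27 * Csol R ^ 2 * (R + 2) * (3 * k + 30)).

Lemma eta0_pos k R : 0 < k -> 0 <= R -> 0 < eta0 k R.
Proof.
  intros Hk HR. unfold eta0, Csol. apply Rinv_0_lt_compat.
  assert (0 < 1 + (R + 3) ^ 3 / 30). { assert (0 < (R+3)^3) by (apply pow_lt; lra). lra. }
  assert (0 < (1 + (R + 3) ^ 3 / 30) ^ 2) by (apply pow_lt; lra).
  apply Rmult_lt_0_compat; [|lra]. apply Rmult_lt_0_compat; [|lra]. lra.
Qed.

Lemma div_le_c x y c : 0 < y -> x <= c * y -> x / y <= c.
Proof.
  intros Hy H. apply Rmult_le_reg_r with y. auto.
  unfold Rdiv. rewrite Rmult_assoc, Rinv_l by lra. lra.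
Qed.

Lemma sol_lower k eps u v w Rr : IntSol k eps u v w -> 0 < eps -> 0 < k -> 0 <= Rr ->
  forall R0, 0 <= R0 <= Rr -> eta0 k Rr <= u R0.
Proof.
  intros Hs Heps Hk HR R0 HR0.
  pose proof Hs as (Hcu & Hcv & Hcw & Heu & Hev & Hew & Hp & Hw & Hv & Hu).
  destruct (Rle_lt_dec (eta0 k Rr) (u R0)) as [|Hlt]; auto. exfalso.
  set (eta := u R0). assert (Heta : 0 < eta) by apply Hp.
  set (C := Csol Rr).
  assert (HC1 : 1 <= C).
  { unfold C, Csol. assert (0 < (Rr+3)^3) by (apply pow_lt; lra). lra. }
  set (a := eta / C).
  assert (Ha0 : 0 < a) by (unfold a; apply Rdiv_lt_0_compat; lra).
  assert (Hetas : eta * (27 * C ^ 2 * (Rr + 2) * (3 * k + 30)) < 1).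
  { unfold eta0 in Hlt. fold C in Hlt.
    assert (0 < 27 * C ^ 2 * (Rr + 2) * (3 * k + 30)).
    { assert (0 < C ^ 2) by (apply pow_lt; lra). apply Rmult_lt_0_compat; [|lra].
      apply Rmult_lt_0_compat; [|lra]. lra. }
    apply Rmult_lt_compat_r with (r := 27 * C ^ 2 * (Rr + 2) * (3 * k + 30)) in Hlt; auto.
    rewrite Rinv_l in Hlt by lra. exact Hlt. }
  assert (Hetasmall : eta < / 60).
  { assert (1 <= C ^ 2) by (simpl; nra).
    assert (60 <= 27 * C ^ 2 * (Rr + 2) * (3 * k + 30)). 
    { assert (27 <= 27 * C ^ 2) by lra. assert (2 <= Rr + 2) by lra.
      assert (54 <= 27 * C ^ 2 * (Rr + 2)) by nra. nra. }
    apply Rmult_lt_reg_r with 60. lra. rewrite Rinv_l by lra. nra. }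
  assert (Ha1 : a < / 60).
  { unfold a. apply Rmult_lt_reg_r with C. lra. unfold Rdiv. rewrite Rmult_assoc, Rinv_l by lra. nra. }
  set (p := R0 + a). set (q := R0 + 2 * a). set (r1 := R0 + 2).
  set (H := fun s => / (u s ^ 3)).
  assert (HcH : cont H).
  { apply (Cn_cont 0). apply (Cn_ext 0 (fun s => -1 * hu u s)). intros; unfold hu, H; ring.
    apply Cn_scal. apply hu_cont; auto. }
  assert (HH0 : forall s, 0 < H s).
  { intros s. unfold H. apply Rinv_0_lt_compat. apply pow_lt. auto. }
  assert (HHpq : forall s, p <= s <= q -> / (27 * eta ^ 3) <= H s).
  { intros s Hs'. unfold H.
    assert (Hus : u s <= eta + C * (s - R0)).
    { apply (sol_u_incr_bound k eps u v w Hs Heps R0 s C); try lra.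
      unfold p, q in Hs'. lra. unfold C, Csol. assert (s ^ 3 <= (Rr + 3) ^ 3) by (apply pow_incr; unfold p, q in Hs'; split; lra). lra. }
    assert (Hus' : u s <= 3 * eta).
    { assert (C * (s - R0) <= 2 * eta).
      { replace (2 * eta) with (C * (2 * a)) by (unfold a; field; lra). apply Rmult_le_compat_l; unfold q, p in *; lra. }
      lra. }
    apply Rinv_le_contravar. apply pow_lt; auto.
    replace (27 * eta ^ 3) with ((3 * eta) ^ 3) by ring. apply pow_incr. split; [apply Rlt_le, Hp| auto]. }
  set (F := fun s => s * (1 - s / r1) * H s).
  assert (HcF : cont F).
  { apply cont_mult; auto. apply cont_mult. apply cont_id. intros x; apply dcont. auto_derive. unfold r1; lra. }
  assert (HF0 : forall s, 0 <= s <= r1 -> 0 <= F s).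
  { intros s Hs'. unfold F. apply Rmult_le_pos. apply Rmult_le_pos. lra.
    assert (s / r1 <= 1). { apply Rmult_le_reg_r with r1. unfold r1; lra. unfold Rdiv; rewrite Rmult_assoc, Rinv_l; unfold r1 in *; lra. } lra.
    apply Rlt_le, HH0. }
  set (M := / (27 * C ^ 2 * (Rr + 2) * eta)).
  assert (HKH : M <= K H r1).
  { rewrite K_kernel2 by (auto; unfold r1; lra). fold F.
    assert (Hex : forall x y, 0 <= x -> x <= y -> ex_RInt F x y) by (intros; apply exR_cont; intros; auto).
    rewrite <- (RInt_ChaslesR F 0 p r1) by (apply Hex; unfold p, r1 in *; lra).
    rewrite <- (RInt_ChaslesR F p q r1) by (apply Hex; unfold p, q, r1 in *; lra).
    assert (0 <= RInt F 0 p). { apply RInt_ge_0. unfold p; lra. apply Hex; unfold p; lra. intros; apply HF0; unfold p, r1 in *; lra. }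
    assert (0 <= RInt F q r1). { apply RInt_ge_0. unfold q, r1; lra. apply Hex; unfold q, r1; lra. intros; apply HF0; unfold q, r1 in *; lra. }
    set (m := a * / (Rr + 2) * / (27 * eta ^ 3)).
    assert (RInt (fun _ => m) p q <= RInt F p q).
    { apply RInt_le. unfold p, q; lra. apply exR_cont; intros; apply continuous_const.
      apply Hex; unfold p, q; lra.
      intros s Hs'. unfold F, m. apply Rmult_le_compat.
      - apply Rmult_le_pos. lra. apply Rlt_le, Rinv_0_lt_compat; lra.
      - apply Rlt_le, Rinv_0_lt_compat. apply Rmult_lt_0_compat. lra. apply pow_lt; lra.
      - assert (Hs1 : a <= s) by (unfold p in Hs'; lra).
        assert (Hs2 : / (Rr + 2) <= 1 - s / r1).
        { assert (Hq1 : 1 - s / r1 = (r1 - s) * / r1) by (field; unfold r1; lra). rewrite Hq1.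
          apply Rle_trans with (1 * / r1).
          rewrite Rmult_1_l. apply Rinv_le_contravar. unfold r1; lra. unfold r1; lra.
          apply Rmult_le_compat_r. apply Rlt_le, Rinv_0_lt_compat; unfold r1; lra.
          unfold r1, q in *; lra. }
        apply Rmult_le_compat; try lra. apply Rlt_le, Rinv_0_lt_compat; lra.
      - apply HHpq. lra. }
    rewrite RInt_constR in H2.
    assert (M = m * (q - p)).
    { unfold M, m, q, p, a. field. repeat split; try lra. }
    lra. }
  assert (HM : 3 * k + 30 < M).
  { unfold M. 
    assert (0 < 27 * C ^ 2 * (Rr + 2) * eta).
    { assert (0 < C ^ 2) by (apply pow_lt; lra). apply Rmult_lt_0_compat; [|lra].
      apply Rmult_lt_0_compat; [|lra]. lra. }
    apply Rmult_lt_reg_r with (27 * C ^ 2 * (Rr + 2) * eta). auto. rewrite Rinv_l by lra. nra. }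
  assert (Hwr1 : w r1 <= 1 - M).
  { rewrite Hw. rewrite (K_ext (hu u) (fun s => -1 * H s)) by (intros; unfold hu, H; ring).
    rewrite K_scal by auto. lra. }
  set (A := r1). set (b := 3 * A).
  assert (HA : 2 <= A <= Rr + 2) by (unfold A, r1; lra).
  set (al := 1 + M / 8). set (be := - (M / (8 * A ^ 2))).
  assert (HA2 : 0 < A ^ 2) by (apply pow_lt; lra).
  assert (HwP : forall s, 0 <= s < b -> w s <= al + be * s ^ 2).
  { intros s Hs'. unfold al, be.
    destruct (Rle_dec s A).
    - pose proof (sol_w_le1 k eps u v w Hs s (proj1 Hs')).
      assert (s ^ 2 <= A ^ 2) by (apply pow_incr; lra).
      assert (M / (8 * A ^ 2) * s ^ 2 <= M / 8).
      { replace (M / (8 * A ^ 2) * s ^ 2) with (M / 8 * (s ^ 2 / A ^ 2)) by (field; lra).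
        replace (M / 8) with (M / 8 * 1) at 2 by ring. apply Rmult_le_compat_l. lra.
        apply div_le_c; lra. }
      lra.
    - pose proof (sol_w_decr k eps u v w Hs A s ltac:(unfold A, r1; lra) ltac:(lra)).
      assert (s ^ 2 <= 9 * A ^ 2) by (replace (9 * A ^ 2) with ((3 * A) ^ 2) by ring; apply pow_incr; unfold b in *; lra).
      assert (M / (8 * A ^ 2) * s ^ 2 <= 9 * M / 8).
      { replace (M / (8 * A ^ 2) * s ^ 2) with (M / 8 * (s ^ 2 / A ^ 2)) by (field; lra).
        replace (9 * M / 8) with (M / 8 * 9) by field. apply Rmult_le_compat_l. lra.
        apply div_le_c; lra. }
      fold A in Hwr1. lra. }
  assert (HvP : forall s, 0 <= s < b -> v s <= K (fun s => al + be * s ^ 2) s).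
  { intros s Hs'. rewrite Hv. assert (K w s <= K (fun s => al + be * s ^ 2) s).
    { apply K_mono; auto. apply cont_quad. lra. intros y Hy. apply HwP. lra. } lra. }
  assert (Hub : u b <= k + (al / 6 * b ^ 4 / 20 + be / 20 * b ^ 6 / 42)).
  { rewrite Hu. rewrite <- K_quart.
    assert (K v b <= K (fun s => al / 6 * s ^ 2 + be / 20 * s ^ 4) b).
    { apply K_mono; auto. apply cont_plus; apply cont_scal, cont_poly. unfold b; lra.
      intros s Hs'. rewrite HvP by auto. rewrite K_quad. right; field. }
    lra. }
  pose proof (Hp b) as Hpb.
  assert (Hval : al / 6 * b ^ 4 / 20 + be / 20 * b ^ 6 / 42 = A ^ 4 * (81 / 120 - M * 162 / 6720)).
  { unfold al, be, b. field. lra. }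
  rewrite Hval in Hub.
  assert (16 <= A ^ 4). { replace 16 with (2 ^ 4) by ring. apply pow_incr. lra. }
  assert (A ^ 4 * (3 * k + 30) <= A ^ 4 * M) by (apply Rmult_le_compat_l; lra).
  nra.
Qed.

Lemma K_minus f g r : cont f -> cont g -> K (fun s => f s - g s) r = K f r - K g r.
Proof.
  intros Hf Hg. rewrite (K_ext _ (fun s => f s + (-1) * g s)) by (intros; ring).
  rewrite K_plus, K_scal; auto. ring. apply cont_scal; auto.
Qed.

Lemma cont_minus f g : cont f -> cont g -> cont (fun s => f s - g s).
Proof. intros Hf Hg x. apply pt_cont. apply continuity_pt_minus; apply cont_pt; auto. Qed.

Lemma hu_mono u1 u2 s : 0 < u2 s -> u2 s <= u1 s -> hu u2 s <= hu u1 s.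
Proof.
  intros H0 H. unfold hu. apply Ropp_le_contravar. apply Rinv_le_contravar.
  apply pow_lt; auto. apply pow_incr; lra.
Qed.

Lemma compare k e1 e2 u1 v1 w1 u2 v2 w2 :
  IntSol k e1 u1 v1 w1 -> IntSol k e2 u2 v2 w2 -> e1 < e2 -> forall r, u2 r <= u1 r.
Proof.
  intros S1 S2 He.
  pose proof S1 as (Hcu1 & Hcv1 & Hcw1 & Heu1 & Hev1 & Hew1 & Hp1 & Hw1 & Hv1 & Hu1).
  pose proof S2 as (Hcu2 & Hcv2 & Hcw2 & Heu2 & Hev2 & Hew2 & Hp2 & Hw2 & Hv2 & Hu2).
  assert (Hpos : forall t, 0 <= t -> u2 t <= u1 t).
  2:{ intros r. destruct (Rle_dec 0 r). apply Hpos; auto. rewrite <- Heu1, <- Heu2. apply Hpos; lra. }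
  apply NNPP. intros Hn. apply not_all_ex_not in Hn. destruct Hn as [t0 Ht0].
  apply imply_to_and in Ht0. destruct Ht0 as [Ht0 Hlt]. apply Rnot_le_lt in Hlt.
  set (S := fun t => 0 <= t /\ forall s, 0 <= s <= t -> u2 s <= u1 s).
  assert (HSb : bound S).
  { exists t0. intros t [Ht Hs]. destruct (Rle_dec t t0); auto. exfalso.
    specialize (Hs t0 ltac:(lra)). lra. }
  assert (HS0 : exists x, S x).
  { exists 0. split. lra. intros s Hs. replace s with 0 by lra. rewrite Hu1, Hu2, !K_0. lra. }
  destruct (completeness S HSb HS0) as [T [HTub HTl]].
  assert (HT0 : 0 <= T) by (apply HTub; split; [lra| intros s Hs; replace s with 0 by lra; rewrite Hu1, Hu2, !K_0; lra]).
  assert (HA : forall s, 0 <= s < T -> u2 s <= u1 s).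
  { intros s Hs. apply NNPP. intros Hn.
    assert (Hub : is_upper_bound S s).
    { intros t [Ht Hst]. destruct (Rle_dec t s); auto. exfalso. apply Hn. apply Hst. lra. }
    specialize (HTl s Hub). lra. }
  assert (Hch1 : cont (hu u1)) by (apply hu_cont; auto).
  assert (Hch2 : cont (hu u2)) by (apply hu_cont; auto).
  assert (Hdw : forall t, 0 <= t <= T -> w2 t <= w1 t).
  { intros t Ht. rewrite Hw1, Hw2.
    assert (0 <= K (fun s => hu u1 s - hu u2 s) t).
    { apply K_nonneg. apply cont_minus; auto. lra.
      intros s Hs. assert (hu u2 s <= hu u1 s) by (apply hu_mono; auto; apply HA; lra). lra. }
    rewrite K_minus in H; auto. lra. }
  set (dv := fun t => v1 t - v2 t).
  assert (Hdv : forall t, 0 <= t <= T -> e2 - e1 <= dv t).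
  { intros t Ht. unfold dv. rewrite Hv1, Hv2.
    assert (0 <= K (fun s => w1 s - w2 s) t).
    { apply K_nonneg. apply cont_minus; auto. lra.
      intros s Hs. assert (w2 s <= w1 s) by (apply Hdw; lra). lra. }
    rewrite K_minus in H; auto. lra. }
  assert (Hcdv : cont dv) by (apply cont_minus; auto).
  destruct (cont_eps_inv dv T (Hcdv T) ((e2 - e1) / 2) ltac:(lra)) as [d [Hd Hdd]].
  assert (HS' : S (T + d / 2)).
  { split. lra. intros s Hs.
    rewrite Hu1, Hu2.
    assert (0 <= K (fun s => v1 s - v2 s) s).
    { apply K_nonneg. apply cont_minus; auto. lra.
      intros y Hy. destruct (Rle_dec y T).
      - pose proof (Hdv y ltac:(lra)). unfold dv in H. lra.
      - assert (Rabs (y - T) < d) by (rewrite Rabs_right; lra).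
        specialize (Hdd y H). pose proof (Hdv T ltac:(lra)).
        apply Rabs_lt_between in Hdd. unfold dv in *. lra. }
    rewrite K_minus in H; auto. lra. }
  specialize (HTub _ HS'). lra.
Qed.

Definition LipOn (f : R -> R) (Rr L : R) : Prop :=
  forall x y, Rabs x <= Rr -> Rabs y <= Rr -> Rabs (f x - f y) <= L * Rabs (x - y).

Lemma Un_cv_abs_le (a : nat -> R) l B : Un_cv a l -> (forall n, Rabs (a n) <= B) -> Rabs l <= B.
Proof.
  intros Hc Hb. apply Rnot_lt_le. intros Hlt.
  destruct (Hc (Rabs l - B)) as [N HN]. lra.
  specialize (HN N (Nat.le_refl N)). specialize (Hb N). unfold Rdist in HN.
  pose proof (Rabs_triang_inv l (a N)). rewrite Rabs_minus_sym in HN. lra.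
Qed.

Lemma lip_limit (g : nat -> R -> R) gl Rr L :
  (forall n, LipOn (g n) Rr L) -> (forall x, Rabs x <= Rr -> Un_cv (fun n => g n x) (gl x)) ->
  LipOn gl Rr L.
Proof.
  intros Hl Hc x y Hx Hy.
  apply (Un_cv_abs_le (fun n => g n x - g n y)).
  - apply CV_minus; auto.
  - intros n. apply Hl; auto.
Qed.

Lemma lip_cont (f : R -> R) : (forall Rr, 0 <= Rr -> exists L, 0 <= L /\ LipOn f Rr L) -> cont f.
Proof.
  intros H x. apply cont_eps. intros eps Heps.
  destruct (H (Rabs x + 1)) as [L [HL Hlip]]. pose proof (Rabs_pos x); lra.
  exists (Rmin 1 (eps / (L + 1))). split. apply Rmin_glb_lt; [lra| apply Rdiv_lt_0_compat; lra].
  intros y Hy. assert (Hy1 : Rabs (y - x) < 1) by (eapply Rlt_le_trans; [exact Hy| apply Rmin_l]).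
  assert (Hy2 : Rabs (y - x) < eps / (L + 1)) by (eapply Rlt_le_trans; [exact Hy| apply Rmin_r]).
  eapply Rle_lt_trans. apply Hlip.
  - replace y with (x + (y - x)) by ring. eapply Rle_trans. apply Rabs_triang. lra.
  - lra.
  - apply Rle_lt_trans with ((L + 1) * Rabs (y - x)).
    apply Rmult_le_compat_r. apply Rabs_pos. lra.
    apply Rmult_lt_reg_l with (/ (L + 1)). apply Rinv_0_lt_compat; lra.
    rewrite <- Rmult_assoc, Rinv_l by lra. lra.
Qed.

Lemma grid_cover Rr h : 0 <= Rr -> 0 < h -> forall i : nat, forall x,
  - Rr <= x <= Rr -> x <= - Rr + INR i * h ->
  exists j : nat, (j <= i)%nat /\ Rabs (x - Rmin (- Rr + INR j * h) Rr) <= h.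
Proof.
  intros HR Hh. induction i; intros x Hx Hxi.
  - exists 0%nat. split. lia. simpl in Hxi. rewrite Rmult_0_l, Rplus_0_r in *.
    rewrite Rmin_left by lra. replace (x - - Rr) with 0 by lra. rewrite Rabs_R0. lra.
  - destruct (Rle_dec x (- Rr + INR i * h)) as [Hle|Hgt].
    + destruct (IHi x Hx Hle) as [j [Hj Hjx]]. exists j. split; auto.
    + exists (S i). split. lia. rewrite S_INR in *.
      apply Rabs_le_between. unfold Rmin. destruct (Rle_dec (- Rr + (INR i + 1) * h) Rr); lra.
Qed.

Lemma finite_N (c : nat -> nat -> Prop) : (forall j, exists N, forall n, (n >= N)%nat -> c j n) ->
  forall m, exists N, forall j n, (j <= m)%nat -> (n >= N)%nat -> c j n.
Proof.
  intros H m. induction m.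
  - destruct (H 0%nat) as [N HN]. exists N. intros j n Hj Hn. replace j with 0%nat by lia. auto.
  - destruct IHm as [N1 H1]. destruct (H (S m)) as [N2 H2]. exists (max N1 N2).
    intros j n Hj Hn. destruct (Nat.eq_dec j (S m)) as [->|Hne].
    apply H2; lia. apply H1; lia.
Qed.

Lemma unif_conv (g : nat -> R -> R) gl Rr L : 0 <= Rr -> 0 <= L ->
  (forall n, LipOn (g n) Rr L) -> (forall x, Rabs x <= Rr -> Un_cv (fun n => g n x) (gl x)) ->
  forall d, 0 < d -> exists N, forall n x, (n >= N)%nat -> Rabs x <= Rr -> Rabs (g n x - gl x) <= d.
Proof.
  intros HR HL Hl Hc d Hd.
  pose proof (lip_limit g gl Rr L Hl Hc) as Hgl.
  set (h := d / (3 * (L + 1))).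
  assert (Hh : 0 < h) by (unfold h; apply Rdiv_lt_0_compat; lra).
  destruct (INR_unbounded (2 * Rr / h)) as [m Hm].
  set (xj := fun j : nat => Rmin (- Rr + INR j * h) Rr).
  assert (Hxj : forall j, Rabs (xj j) <= Rr).
  { intros j. unfold xj. apply Rabs_le_between. pose proof (pos_INR j).
    unfold Rmin; destruct (Rle_dec (- Rr + INR j * h) Rr); nra. }
  destruct (finite_N (fun j n => Rabs (g n (xj j) - gl (xj j)) < d / 3)) with (m := m) as [N HN].
  { intros j. destruct (Hc (xj j) (Hxj j) (d / 3)) as [N HN]. lra. exists N. intros n Hn.
    specialize (HN n Hn). unfold Rdist in HN. auto. }
  exists N. intros n x Hn Hx.
  apply Rabs_le_between in Hx.
  destruct (grid_cover Rr h HR Hh m x Hx) as [j [Hj Hjx]].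
  { assert (2 * Rr <= INR m * h).
    { assert (Heq : 2 * Rr = (2 * Rr / h) * h) by (field; lra). rewrite Heq.
      apply Rmult_le_compat_r; lra. }
    lra. }
  fold (xj j) in Hjx.
  assert (Hxa : Rabs x <= Rr) by (apply Rabs_le_between; lra).
  specialize (HN j n Hj Hn).
  pose proof (Hl n x (xj j) Hxa (Hxj j)) as H1.
  pose proof (Hgl x (xj j) Hxa (Hxj j)) as H2.
  replace (g n x - gl x) with ((g n x - g n (xj j)) + (g n (xj j) - gl (xj j)) + (gl (xj j) - gl x)) by ring.
  eapply Rle_trans. apply Rabs_triang. eapply Rle_trans. apply Rplus_le_compat_r. apply Rabs_triang.
  rewrite (Rabs_minus_sym (gl (xj j))).
  assert (L * Rabs (x - xj j) <= d / 3).
  { apply Rle_trans with (L * h). apply Rmult_le_compat_l; auto.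
    unfold h. apply Rle_trans with ((L + 1) * (d / (3 * (L + 1)))).
    apply Rmult_le_compat_r. apply Rlt_le; auto. lra. right. field. lra. }
  lra.
Qed.

Lemma K_limit (g : nat -> R -> R) gl Rr : 0 <= Rr -> (forall n, cont (g n)) -> cont gl ->
  (forall d, 0 < d -> exists N, forall n x, (n >= N)%nat -> Rabs x <= Rr -> Rabs (g n x - gl x) <= d) ->
  forall r, Rabs r <= Rr -> Un_cv (fun n => K (g n) r) (K gl r).
Proof.
  intros HR Hc Hcl Hu r Hr eps Heps.
  assert (Hrr : 0 < Rr * Rr + 1) by (pose proof (Rle_0_sqr Rr); unfold Rsqr in *; lra).
  assert (Hp : 0 < eps / (Rr * Rr + 1)) by (apply Rdiv_lt_0_compat; lra).
  destruct (Hu (eps / (Rr * Rr + 1)) Hp) as [N HN].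
  exists N. intros n Hn. unfold Rdist. rewrite <- K_minus by auto.
  eapply Rle_lt_trans. apply (K_bnd _ Rr (eps / (Rr * Rr + 1))).
  apply cont_minus; auto. intros s Hs. apply HN; auto. auto.
  apply Rle_lt_trans with ((Rr * Rr + 1) * (eps / (Rr * Rr + 1)) - eps / (Rr * Rr + 1)).
  right. field. lra.
  replace ((Rr * Rr + 1) * (eps / (Rr * Rr + 1))) with eps by (field; lra). lra.
Qed.

Lemma Un_cv_ge (x : nat -> R) l m : Un_cv x l -> (forall n, m <= x n) -> m <= l.
Proof.
  intros Hc Hm. apply Rnot_lt_le. intros Hlt.
  destruct (Hc (m - l)) as [N HN]. lra. specialize (HN N (Nat.le_refl N)). specialize (Hm N).
  unfold Rdist in HN. apply Rabs_lt_between in HN. lra.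
Qed.

Lemma Un_cv_const c : Un_cv (fun _ => c) c.
Proof. intros eps Heps. exists 0%nat. intros. unfold Rdist. rewrite Rminus_diag, Rabs_R0. lra. Qed.

Lemma Un_cv_plus_c c (x : nat -> R) l : Un_cv x l -> Un_cv (fun n => c + x n) (c + l).
Proof. intros H. apply CV_plus; auto. apply Un_cv_const. Qed.

Lemma hu_lip a b m : 0 < m -> m <= a -> m <= b ->
  Rabs (- / (a ^ 3) - - / (b ^ 3)) <= 3 / m ^ 4 * Rabs (a - b).
Proof.
  intros Hm Ha Hb.
  destruct (MVT_gen (fun x => - / (x ^ 3)) b a (fun x => 3 / x ^ 4)) as [c [Hc Heq]].
  - intros x Hx. assert (0 < x). { destruct Hx as [Hx _]. eapply Rle_lt_trans; [|exact Hx]. apply Rmin_glb; lra. }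
    auto_derive. apply Rgt_not_eq; repeat apply Rmult_lt_0_compat; lra. field. lra.
  - intros x Hx. assert (0 < x). { destruct Hx as [Hx _]. eapply Rlt_le_trans; [|exact Hx]. apply Rmin_glb_lt; lra. }
    apply cont_pt. apply dcont. auto_derive. apply Rgt_not_eq; repeat apply Rmult_lt_0_compat; lra.
  - rewrite Heq. rewrite Rabs_mult.
    assert (Hcm : m <= c). { destruct Hc as [Hc _]. eapply Rle_trans; [|exact Hc]. apply Rmin_glb; lra. }
    apply Rmult_le_compat_r. apply Rabs_pos.
    rewrite Rabs_right. 2:{ apply Rle_ge. apply Rlt_le. apply Rdiv_lt_0_compat. lra. apply pow_lt; lra. }
    unfold Rdiv. apply Rmult_le_compat_l. lra. apply Rinv_le_contravar. apply pow_lt; lra.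
    apply pow_incr; lra.
Qed.

Lemma LipOn_cK c f Rr Bd : cont f -> (forall s, Rabs s <= Rr -> Rabs (f s) <= Bd) ->
  LipOn (fun t => c + K f t) Rr (Rr * Bd).
Proof.
  intros Hf Hb x y Hx Hy. replace (c + K f x - (c + K f y)) with (K f x - K f y) by ring.
  apply K_lip; auto.
Qed.

Lemma master k (es : nat -> R) estar (a b : nat -> R -> R) ustar :
  Un_cv es estar ->
  (forall n, cont (a n)) -> (forall n, evenf (a n)) ->
  (forall Rr, 0 <= Rr -> exists m, 0 < m /\ forall n x, Rabs x <= Rr -> m <= a n x) ->
  (forall Rr, 0 <= Rr -> exists L, 0 <= L /\ forall n, LipOn (a n) Rr L) ->
  (forall n r, b n r = k + K (fun s => - es n + K (fun t => 1 + K (hu (a n)) t) s) r) ->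
  (forall r, Un_cv (fun n => a n r) (ustar r)) -> (forall r, Un_cv (fun n => b n r) (ustar r)) ->
  IntSol k estar ustar (fun s => - estar + K (fun t => 1 + K (hu ustar) t) s) (fun t => 1 + K (hu ustar) t).
Proof.
  intros Hes Hca Hea Hlow Hlip Hb Hcva Hcvb.
  assert (Hpa : forall n x, 0 < a n x).
  { intros n x. destruct (Hlow (Rabs x) (Rabs_pos x)) as [m [Hm Hmm]].
    specialize (Hmm n x (Rle_refl _)). lra. }
  assert (Heu : evenf ustar).
  { intros r. apply (UL_sequence (fun n => a n r)); auto.
    apply (Un_cv_ext (fun n => a n (- r))). intros; apply Hea. auto. }
  assert (Hlu : forall Rr, 0 <= Rr -> exists m, 0 < m /\ forall x, Rabs x <= Rr -> m <= ustar x).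
  { intros Rr HR. destruct (Hlow Rr HR) as [m [Hm Hmm]]. exists m. split; auto.
    intros x Hx. apply (Un_cv_ge (fun n => a n x)); auto. }
  assert (Hpu : forall x, 0 < ustar x).
  { intros x. destruct (Hlu (Rabs x) (Rabs_pos x)) as [m [Hm Hmm]]. specialize (Hmm x (Rle_refl _)). lra. }
  assert (Hcu : cont ustar).
  { apply lip_cont. intros Rr HR. destruct (Hlip Rr HR) as [L [HL HLL]].
    exists L. split; auto. apply (lip_limit a); auto. }
  set (h := hu ustar).
  assert (Hch : cont h) by (apply hu_cont; auto).
  set (ws := fun t => 1 + K h t).
  assert (Hcw : cont ws) by (apply cont_plus; [apply cont_const| apply K_cont; auto]).
  set (vs := fun s => - estar + K ws s).
  assert (Hcv : cont vs) by (apply cont_plus; [apply cont_const| apply K_cont; auto]).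
  assert (Heh : evenf h) by (apply hu_even; auto).
  assert (Hew : evenf ws) by (intros r; unfold ws; rewrite K_even; auto).
  assert (Hev : evenf vs) by (intros r; unfold vs; rewrite K_even; auto).
  assert (Hmain : forall r, ustar r = k + K vs r).
  { intros r. set (Rr := Rabs r). assert (HR : 0 <= Rr) by apply Rabs_pos.
    destruct (Hlow Rr HR) as [m [Hm Hmm]]. destruct (Hlip Rr HR) as [L [HL HLL]].
    set (hn := fun n => hu (a n)).
    assert (Hchn : forall n, cont (hn n)) by (intros; apply hu_cont; auto).
    assert (Hhb : forall n s, Rabs s <= Rr -> Rabs (hn n s) <= / m ^ 3).
    { intros n s Hs. unfold hn, hu. rewrite Rabs_Ropp. rewrite Rabs_right.
      apply Rinv_le_contravar. apply pow_lt; auto. apply pow_incr. split; [lra| apply Hmm; auto].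
      apply Rle_ge, Rlt_le, Rinv_0_lt_compat, pow_lt; auto. }
    assert (Hm3 : 0 < / m ^ 3) by (apply Rinv_0_lt_compat, pow_lt; auto).
    assert (Uh : forall d, 0 < d -> exists N, forall n x, (n >= N)%nat -> Rabs x <= Rr -> Rabs (hn n x - h x) <= d).
    { apply (unif_conv hn h Rr (3 / m ^ 4 * L)); auto.
      - apply Rmult_le_pos; auto. apply Rlt_le, Rdiv_lt_0_compat. lra. apply pow_lt; auto.
      - intros n x y Hx Hy. unfold hn, hu. eapply Rle_trans. apply (hu_lip (a n x) (a n y) m); auto.
        rewrite Rmult_assoc. apply Rmult_le_compat_l. apply Rlt_le, Rdiv_lt_0_compat. lra. apply pow_lt; auto.
        apply HLL; auto.
      - intros x Hx. unfold hn, h, hu.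
        apply (continuity_seq (fun y => - / (y ^ 3)) (fun n => a n x)); auto.
        apply cont_pt. apply dcont. auto_derive. specialize (Hpu x). apply Rgt_not_eq; repeat apply Rmult_lt_0_compat; lra. }
    pose proof (K_limit hn h Rr HR Hchn Hch Uh) as KH.
    set (wn := fun n t => 1 + K (hn n) t).
    assert (Hcwn : forall n, cont (wn n)) by (intros; apply cont_plus; [apply cont_const| apply K_cont; auto]).
    assert (Uw : forall d, 0 < d -> exists N, forall n x, (n >= N)%nat -> Rabs x <= Rr -> Rabs (wn n x - ws x) <= d).
    { apply (unif_conv wn ws Rr (Rr * / m ^ 3)); auto.
      - apply Rmult_le_pos; lra.
      - intros n. apply LipOn_cK; auto.
      - intros x Hx. apply Un_cv_plus_c. apply KH; auto. }
    pose proof (K_limit wn ws Rr HR Hcwn Hcw Uw) as KW.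
    set (vn := fun n s => - es n + K (wn n) s).
    assert (Hcvn : forall n, cont (vn n)).
    { intros n. apply cont_plus; [apply cont_const| apply K_cont; auto]. }
    assert (Uv : forall d, 0 < d -> exists N, forall n x, (n >= N)%nat -> Rabs x <= Rr -> Rabs (vn n x - vs x) <= d).
    { apply (unif_conv vn vs Rr (Rr * (1 + Rr * / m ^ 3 * Rr))); auto.
      - apply Rmult_le_pos; auto. assert (0 <= Rr * / m ^ 3 * Rr) by (apply Rmult_le_pos; [apply Rmult_le_pos|]; lra). lra.
      - intros n. apply LipOn_cK; auto. intros s Hs. unfold wn.
        eapply Rle_trans. apply Rabs_triang. rewrite Rabs_R1. apply Rplus_le_compat_l.
        apply K_bnd; auto.
      - intros x Hx. apply CV_plus. apply CV_opp; auto. apply KW; auto. }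
    pose proof (K_limit vn vs Rr HR Hcvn Hcv Uv r (Rle_refl _)) as KV.
    apply (UL_sequence (fun n => b n r)); auto.
    apply (Un_cv_ext (fun n => k + K (vn n) r)). intros n. rewrite Hb. reflexivity.
    apply Un_cv_plus_c. auto. }
  repeat split; auto.
Qed.

Definition Tm (k e : R) (u : R -> R) : R -> R :=
  fun r => k + K (fun s => - e + K (fun t => 1 + K (hu u) t) s) r.

Lemma Tm_lip k e u Rr m E : cont u -> 0 <= Rr -> 0 < m -> (forall x, 0 < u x) ->
  (forall x, Rabs x <= Rr -> m <= u x) -> Rabs e <= E ->
  LipOn (Tm k e u) Rr (Rr * (E + Rr * (1 + Rr * / m ^ 3 * Rr) * Rr)).
Proof.
  intros Hc HR Hm Hp Hmm HE. unfold Tm.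
  assert (Hch : cont (hu u)) by (apply hu_cont; auto).
  assert (Hhb : forall s, Rabs s <= Rr -> Rabs (hu u s) <= / m ^ 3).
  { intros s Hs. unfold hu. rewrite Rabs_Ropp. rewrite Rabs_right.
    apply Rinv_le_contravar. apply pow_lt; auto. apply pow_incr. split; [lra| apply Hmm; auto].
    apply Rle_ge, Rlt_le, Rinv_0_lt_compat, pow_lt; auto. }
  assert (Hcw : cont (fun t => 1 + K (hu u) t)) by (apply cont_plus; [apply cont_const| apply K_cont; auto]).
  apply LipOn_cK. apply cont_plus; [apply cont_const| apply K_cont; auto].
  intros s Hs. eapply Rle_trans. apply Rabs_triang. rewrite Rabs_Ropp. apply Rplus_le_compat; auto.
  apply K_bnd; auto. intros y Hy. eapply Rle_trans. apply Rabs_triang. rewrite Rabs_R1.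
  apply Rplus_le_compat_l. apply K_bnd; auto.
Qed.

Lemma Tm_cont k e u : cont u -> (forall x, 0 < u x) -> cont (Tm k e u).
Proof.
  intros Hc Hp. unfold Tm. apply cont_plus. apply cont_const. apply K_cont.
  apply cont_plus. apply cont_const. apply K_cont.
  apply cont_plus. apply cont_const. apply K_cont. apply hu_cont; auto.
Qed.

Lemma Tm_even k e u : cont u -> (forall x, 0 < u x) -> evenf u -> evenf (Tm k e u).
Proof.
  intros Hc Hp He. unfold Tm. intros r. rewrite K_even; auto.
  apply cont_plus. apply cont_const. apply K_cont.
  apply cont_plus. apply cont_const. apply K_cont. apply hu_cont; auto.
  intros x. rewrite K_even; auto.
  apply cont_plus. apply cont_const. apply K_cont. apply hu_cont; auto.
  intros y. rewrite K_even; auto. apply hu_cont; auto. apply hu_even; auto.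
Qed.

Lemma Tm_upper k e u r : cont u -> (forall x, 0 < u x) -> 0 <= r ->
  Tm k e u r <= k - e * r ^ 2 / 6 + r ^ 4 / 120.
Proof.
  intros Hc Hp Hr. unfold Tm.
  assert (Hch : cont (hu u)) by (apply hu_cont; auto).
  assert (Hw : forall t, 0 <= t -> 1 + K (hu u) t <= 1).
  { intros t Ht. assert (K (hu u) t <= 0). apply K_nonpos; auto. intros; apply Rlt_le, hu_neg; auto. lra. }
  assert (Hcw : cont (fun t => 1 + K (hu u) t)) by (apply cont_plus; [apply cont_const| apply K_cont; auto]).
  assert (Hv : forall s, 0 <= s -> - e + K (fun t => 1 + K (hu u) t) s <= - e + / 6 * s ^ 2).
  { intros s Hs. assert (K (fun t => 1 + K (hu u) t) s <= K (fun _ => 1) s).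
    apply K_mono; auto. apply cont_const. intros; apply Hw; lra.
    rewrite K_const in H. lra. }
  assert (K (fun s => - e + K (fun t => 1 + K (hu u) t) s) r <= K (fun s => - e + / 6 * s ^ 2) r).
  { apply K_mono; auto. apply cont_plus; [apply cont_const| apply K_cont; auto]. apply cont_quad.
    intros; apply Hv; lra. }
  rewrite K_quad in H. lra.
Qed.

Lemma K_g_lower r : 0 <= r -> - / 4 <= K (fun s => - / ((1 + s ^ 2) ^ 3)) r.
Proof.
  intros Hr.
  assert (Hg : cont (fun s => - / ((1 + s ^ 2) ^ 3))).
  { intros x. apply dcont. auto_derive. assert (0 < (1 + x * (x * 1)) * ((1 + x * (x * 1)) * ((1 + x * (x * 1)) * 1))).
    { assert (0 < 1 + x * (x * 1)) by nra. repeat apply Rmult_lt_0_compat; lra. } lra. }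
  destruct (Req_dec r 0) as [->|Hne]. rewrite K_0. lra.
  rewrite K_kernel2 by (auto; lra).
  assert (Hcs : cont (fun s => s * - / ((1 + s ^ 2) ^ 3))) by (apply cont_mult; [apply cont_id| auto]).
  apply Rle_trans with (RInt (fun s => s * - / ((1 + s ^ 2) ^ 3)) 0 r).
  - rewrite (RInt_derR (fun s => / (4 * (1 + s ^ 2) ^ 2))).
    + assert (0 < / (4 * (1 + r ^ 2) ^ 2)).
      { apply Rinv_0_lt_compat. assert (0 < 1 + r ^ 2) by nra. assert (0 < (1 + r^2)^2) by (apply pow_lt; lra). lra. }
      replace (/ (4 * (1 + 0 ^ 2) ^ 2)) with (/ 4) by (simpl; field). lra.
    + intros x _. assert (0 < 1 + x ^ 2) by nra. auto_derive.
      assert (0 < 4 * ((1 + x * (x * 1)) * ((1 + x * (x * 1)) * 1))) by (simpl in *; nra). lra.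
      simpl. field. simpl in *. lra.
    + intros; apply Hcs.
  - apply RInt_le. lra. apply exR_cont; intros; auto.
    apply exR_cont; intros. apply cont_mult; auto. apply cont_mult. apply cont_id.
    intros y. apply dcont. auto_derive. lra.
    intros x Hx. 
    assert (0 < / ((1 + x ^ 2) ^ 3)).
    { apply Rinv_0_lt_compat. apply pow_lt. nra. }
    assert (0 <= x / r * x) by (apply Rmult_le_pos; [apply Rdiv_le_0_compat|]; lra).
    replace (x * (1 - x / r) * - / (1 + x ^ 2) ^ 3) with (x * - / (1 + x ^ 2) ^ 3 + (x / r * x) * / (1 + x ^ 2) ^ 3) by ring.
    assert (0 <= (x / r * x) * / (1 + x ^ 2) ^ 3) by (apply Rmult_le_pos; lra). lra.
Qed.

Lemma Tm_lower k u r : 100 <= k -> cont u -> (forall x, 1 + x ^ 2 <= u x) -> 0 <= r ->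
  1 + r ^ 2 <= Tm k 1 u r.
Proof.
  intros Hk Hc Hl Hr. unfold Tm.
  assert (Hp : forall x, 0 < u x) by (intros x; specialize (Hl x); nra).
  assert (Hch : cont (hu u)) by (apply hu_cont; auto).
  assert (Hg : cont (fun s => - / ((1 + s ^ 2) ^ 3))).
  { intros x. apply dcont. auto_derive. assert (0 < (1 + x * (x * 1)) * ((1 + x * (x * 1)) * ((1 + x * (x * 1)) * 1))).
    { assert (0 < 1 + x * (x * 1)) by nra. repeat apply Rmult_lt_0_compat; lra. } lra. }
  assert (Hw : forall t, 0 <= t -> 3 / 4 <= 1 + K (hu u) t).
  { intros t Ht. assert (K (fun s => - / ((1 + s ^ 2) ^ 3)) t <= K (hu u) t).
    { apply K_mono; auto. intros s Hs. unfold hu. apply Ropp_le_contravar. apply Rinv_le_contravar.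
      apply pow_lt; nra. apply pow_incr. split; [nra| apply Hl]. }
    pose proof (K_g_lower t Ht). lra. }
  assert (Hcw : cont (fun t => 1 + K (hu u) t)) by (apply cont_plus; [apply cont_const| apply K_cont; auto]).
  assert (Hv : forall s, 0 <= s -> Ropp 1 + / 8 * s ^ 2 <= Ropp 1 + K (fun t => 1 + K (hu u) t) s).
  { intros s Hs. assert (K (fun _ => 3 / 4) s <= K (fun t => 1 + K (hu u) t) s).
    apply K_mono; auto. apply cont_const. intros; apply Hw; lra.
    rewrite K_const in H. lra. }
  assert (K (fun s => Ropp 1 + / 8 * s ^ 2) r <= K (fun s => Ropp 1 + K (fun t => 1 + K (hu u) t) s) r).
  { apply K_mono; auto. apply cont_quad. apply cont_plus; [apply cont_const| apply K_cont; auto].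
    intros; apply Hv; lra. }
  rewrite K_quad in H.
  assert (0 <= (r ^ 2 - 280 / 3) ^ 2) by apply pow2_ge_0.
  replace (r ^ 4) with ((r ^ 2) ^ 2) in H by ring. nra.
Qed.

Lemma Tm_mono k e u1 u2 r : cont u1 -> cont u2 -> (forall x, 0 < u1 x) -> evenf u1 -> evenf u2 ->
  (forall x, u1 x <= u2 x) -> Tm k e u1 r <= Tm k e u2 r.
Proof.
  intros Hc1 Hc2 Hp1 He1 He2 Hle.
  assert (Hp2 : forall x, 0 < u2 x) by (intros x; specialize (Hp1 x); specialize (Hle x); lra).
  assert (Hpos : forall r, 0 <= r -> Tm k e u1 r <= Tm k e u2 r).
  { intros r0 Hr. unfold Tm.
    assert (Hh1 : cont (hu u1)) by (apply hu_cont; auto).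
    assert (Hh2 : cont (hu u2)) by (apply hu_cont; auto).
    assert (Hw1 : cont (fun t => 1 + K (hu u1) t)) by (apply cont_plus; [apply cont_const| apply K_cont; auto]).
    assert (Hw2 : cont (fun t => 1 + K (hu u2) t)) by (apply cont_plus; [apply cont_const| apply K_cont; auto]).
    apply Rplus_le_compat_l. apply K_mono; auto.
    apply cont_plus; [apply cont_const| apply K_cont; auto].
    apply cont_plus; [apply cont_const| apply K_cont; auto].
    intros s Hs. apply Rplus_le_compat_l. apply K_mono; auto. lra.
    intros t Ht. apply Rplus_le_compat_l. apply K_mono; auto. lra.
    intros x Hx. apply hu_mono; auto. }
  destruct (Rle_dec 0 r). apply Hpos; auto.
  rewrite <- (Tm_even k e u1), <- (Tm_even k e u2); auto. apply Hpos; lra.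
Qed.

Fixpoint itT (k : R) (n : nat) : R -> R :=
  match n with
  | O => fun r => k - 1 * r ^ 2 / 6 + r ^ 4 / 120
  | S n => Tm k 1 (itT k n)
  end.

Lemma Un_cv_shift (x : nat -> R) l : Un_cv x l -> Un_cv (fun n => x (S n)) l.
Proof. intros H eps He. destruct (H eps He) as [N HN]. exists N. intros n Hn. apply HN. lia. Qed.

Lemma exist1 k : 100 <= k -> has_pos_entire_radial_sol k 1.
Proof.
  intros Hk.
  set (U := fun r => k - 1 * r ^ 2 / 6 + r ^ 4 / 120).
  assert (Inv : forall n, cont (itT k n) /\ evenf (itT k n) /\ (forall r, 1 + r ^ 2 <= itT k n r) /\
                          (forall r, itT k n r <= U r)).
  { induction n.
    - simpl. split; [|split; [|split]].
      + intros x. apply dcont. auto_derive. auto.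
      + intros r. change (k - 1 * (-r)^2/6 + (-r)^4/120 = k - 1 * r^2/6 + r^4/120). field.
      + intros r. assert (0 <= (r ^ 2 - 70) ^ 2) by apply pow2_ge_0.
        replace (r ^ 4) with ((r ^ 2) ^ 2) by ring. nra.
      + intros r. unfold U. lra.
    - destruct IHn as (Hc & He & Hl & Hu).
      assert (Hp : forall x, 0 < itT k n x) by (intros x; specialize (Hl x); nra).
      simpl. split; [|split; [|split]].
      + apply Tm_cont; auto.
      + apply Tm_even; auto.
      + intros r. destruct (Rle_dec 0 r). apply Tm_lower; auto.
        rewrite <- (Tm_even k 1 (itT k n) Hc Hp He r).
        replace (r * (r * 1)) with ((- r) ^ 2) by ring. apply Tm_lower; auto. lra.
      + intros r. destruct (Rle_dec 0 r). apply Tm_upper; auto.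
        rewrite <- (Tm_even k 1 (itT k n) Hc Hp He r). unfold U.
        replace (r ^ 2) with ((- r) ^ 2) by ring. replace (r ^ 4) with ((- r) ^ 4) by ring.
        apply Tm_upper; auto. lra. }
  assert (Hpos : forall n x, 0 < itT k n x).
  { intros n x. destruct (Inv n) as (_ & _ & Hl & _). specialize (Hl x). nra. }
  assert (Hdec : forall r, Un_decreasing (fun n => itT k n r)).
  { intros r n. revert r. induction n; intros r.
    - destruct (Inv 1%nat) as (_ & _ & _ & Hu). apply Hu.
    - change (Tm k 1 (itT k (S n)) r <= Tm k 1 (itT k n) r).
      destruct (Inv (S n)) as (Hc1 & He1 & _). destruct (Inv n) as (Hc0 & He0 & _).
      apply Tm_mono; auto. }
  assert (Hlb : forall r, has_lb (fun n => itT k n r)).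
  { intros r. exists 0. intros x [i ->]. unfold opp_seq. specialize (Hpos i r). lra. }
  set (ustar := fun r => proj1_sig (decreasing_cv _ (Hdec r) (Hlb r))).
  assert (Hcv : forall r, Un_cv (fun n => itT k n r) (ustar r)).
  { intros r. unfold ustar. destruct (decreasing_cv _ (Hdec r) (Hlb r)) as [l Hl]. simpl. auto. }
  assert (HS : IntSol k 1 ustar (fun s => - 1 + K (fun t => 1 + K (hu ustar) t) s) (fun t => 1 + K (hu ustar) t)).
  { apply (master k (fun _ => 1) 1 (fun n => itT k (S n)) (fun n => itT k (S (S n))) ustar).
    - apply Un_cv_const.
    - intros n. apply Inv.
    - intros n. apply Inv.
    - intros Rr HR. exists 1. split. lra. intros n x _. destruct (Inv (S n)) as (_ & _ & Hl & _).
      specialize (Hl x). assert (0 <= x ^ 2) by (apply pow2_ge_0). lra.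
    - intros Rr HR. exists (Rr * (1 + Rr * (1 + Rr * / 1 ^ 3 * Rr) * Rr)). split.
      { assert (Hi : / 1 ^ 3 = 1) by (simpl; field). rewrite Hi.
        apply Rmult_le_pos; auto.
        assert (0 <= Rr * (1 + Rr * 1 * Rr) * Rr) by (apply Rmult_le_pos; [apply Rmult_le_pos|]; nra). lra. }
      intros n.
      change (LipOn (Tm k 1 (itT k n)) Rr (Rr * (1 + Rr * (1 + Rr * / 1 ^ 3 * Rr) * Rr))).
      destruct (Inv n) as (Hc0 & _ & Hl & _).
      apply (Tm_lip k 1 (itT k n) Rr 1 1); auto; try lra.
      intros x _. specialize (Hl x).
      assert (0 <= x ^ 2) by (apply pow2_ge_0). lra. rewrite Rabs_R1; lra.
    - intros n r. reflexivity.
    - intros r. apply (Un_cv_shift (fun n => itT k n r)). auto.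
    - intros r. apply (Un_cv_shift (fun n => itT k (S n) r)). apply (Un_cv_shift (fun n => itT k n r)). auto. }
  apply (IntSol_reg _ _ _ _ _ HS).
Qed.

Lemma S_bound k eps : 0 < k -> S_k k eps -> eps <= 1 + 6 * k / 5.
Proof.
  intros Hk [He Hs]. destruct (sol_IntSol k eps Hs) as (u & v & w & HS).
  pose proof (sol_eps_bound k eps u v w HS He). destruct (Rle_dec eps 1). lra. nra.
Qed.

Lemma sup_attained k estar : 100 <= k -> is_lub (S_k k) estar -> has_pos_entire_radial_sol k estar.
Proof.
  intros Hk [Hub Hl].
  assert (H1 : S_k k 1) by (split; [lra| apply exist1; auto]).
  assert (He1 : 1 <= estar) by (apply Hub; auto).
  destruct (classic (S_k k estar)) as [Hin|Hnin]. { apply Hin. }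
  assert (Hex : forall x, exists y, x < estar -> S_k k y /\ x < y /\ y < estar).
  { intros x. destruct (Rlt_dec x estar) as [Hx|Hx].
    - apply NNPP. intros Hn.
      assert (Hb : is_upper_bound (S_k k) x).
      { intros y Hy. apply Rnot_lt_le. intros Hxy. apply Hn. exists y. intros _.
        split; auto. split; auto. assert (y <= estar) by (apply Hub; auto).
        destruct (Req_dec y estar) as [->|]; [contradiction| lra]. }
      specialize (Hl x Hb). lra.
    - exists 0. intros; contradiction. }
  set (F := fun x => proj1_sig (constructive_indefinite_description _ (Hex x))).
  assert (HF : forall x, x < estar -> S_k k (F x) /\ x < F x /\ F x < estar).
  { intros x Hx. unfold F. destruct (constructive_indefinite_description _ (Hex x)) as [y Hy]. simpl. auto. }
  set (e := fix e (n : nat) : R := match n with O => F (estar - 1) | S n => F (Rmax (e n) (estar - / INR (S (S n)))) end).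
  assert (He : forall n, S_k k (e n) /\ e n < estar /\ estar - / INR (S n) < e n).
  { induction n.
    - simpl. replace (/ 1) with 1 by field. destruct (HF (estar - 1)) as (A1 & A2 & A3). lra. auto.
    - destruct IHn as (B1 & B2 & B3).
      assert (Hm : Rmax (e n) (estar - / INR (S (S n))) < estar).
      { apply Rmax_lub_lt. auto. assert (0 < / INR (S (S n))) by (apply Rinv_0_lt_compat, lt_0_INR; lia). lra. }
      destruct (HF _ Hm) as (A1 & A2 & A3).
      change (e (S n)) with (F (Rmax (e n) (estar - / INR (S (S n))))).
      split; auto. split; auto. pose proof (Rmax_r (e n) (estar - / INR (S (S n)))). lra. }
  assert (Hinc : forall n, e n < e (S n)).
  { intros n. destruct (He n) as (_ & B2 & _).
    assert (Hm : Rmax (e n) (estar - / INR (S (S n))) < estar).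
    { apply Rmax_lub_lt. auto. assert (0 < / INR (S (S n))) by (apply Rinv_0_lt_compat, lt_0_INR; lia). lra. }
    destruct (HF _ Hm) as (A1 & A2 & A3).
    change (e (S n)) with (F (Rmax (e n) (estar - / INR (S (S n))))).
    pose proof (Rmax_l (e n) (estar - / INR (S (S n)))). lra. }
  assert (Hecv : Un_cv e estar).
  { intros eps Heps. destruct (INR_unbounded (/ eps)) as [N HN]. exists N. intros n Hn.
    destruct (He n) as (_ & B2 & B3). unfold Rdist. rewrite Rabs_left by lra.
    assert (/ INR (S n) < eps).
    { assert (0 < INR (S n)) by (apply lt_0_INR; lia).
      assert (INR N <= INR (S n)) by (apply le_INR; lia).
      apply Rmult_lt_reg_r with (INR (S n)). lra. rewrite Rinv_l by lra.
      apply Rmult_lt_reg_l with (/ eps). apply Rinv_0_lt_compat; lra.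
      rewrite <- Rmult_assoc, Rinv_l, Rmult_1_l by lra. lra. }
    lra. }
  assert (Hsol : forall n, exists p : (R -> R) * (R -> R) * (R -> R), IntSol k (e n) (fst (fst p)) (snd (fst p)) (snd p)).
  { intros n. destruct (He n) as ([_ Hs] & _). destruct (sol_IntSol _ _ Hs) as (u & v & w & HS).
    exists (u, v, w). simpl. auto. }
  set (P := fun n => proj1_sig (constructive_indefinite_description _ (Hsol n))).
  assert (HP : forall n, IntSol k (e n) (fst (fst (P n))) (snd (fst (P n))) (snd (P n))).
  { intros n. unfold P. destruct (constructive_indefinite_description _ (Hsol n)) as [p Hp]. simpl. auto. }
  set (U := fun n => fst (fst (P n))).
  assert (Hk0 : 0 < k) by lra.
  assert (Hepos : forall n, 0 < e n).
  { intros n. destruct (He n) as ([Hp _] & _). auto. }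
  assert (Hdec : forall r, Un_decreasing (fun n => U n r)).
  { intros r n. apply (compare k (e n) (e (S n)) _ _ _ _ _ _ (HP n) (HP (S n))). apply Hinc. }
  assert (Hlb : forall r, has_lb (fun n => U n r)).
  { intros r. exists 0. intros x [i ->]. unfold opp_seq. destruct (HP i) as (_ & _ & _ & _ & _ & _ & Hp & _).
    specialize (Hp r). unfold U. lra. }
  set (ustar := fun r => proj1_sig (decreasing_cv _ (Hdec r) (Hlb r))).
  assert (Hcv : forall r, Un_cv (fun n => U n r) (ustar r)).
  { intros r. unfold ustar. destruct (decreasing_cv _ (Hdec r) (Hlb r)) as [l Hl']. simpl. auto. }
  assert (HU : forall n r, U n r = Tm k (e n) (U n) r).
  { intros n r. destruct (HP n) as (_ & _ & _ & _ & _ & _ & _ & Hw & Hv & Hu).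
    fold (U n) in Hw, Hv, Hu. unfold Tm. rewrite Hu. f_equal. apply K_ext. intros s. rewrite Hv.
    f_equal. apply K_ext. intros t. apply Hw. }
  assert (HS : IntSol k estar ustar (fun s => - estar + K (fun t => 1 + K (hu ustar) t) s) (fun t => 1 + K (hu ustar) t)).
  { apply (master k e estar U U ustar).
    - exact Hecv.
    - intros n. apply (HP n).
    - intros n. apply (HP n).
    - intros Rr HR. exists (eta0 k Rr). split. apply eta0_pos; auto.
      intros n x Hx. destruct (Rle_dec 0 x).
      + apply (sol_lower k (e n) _ _ _ Rr (HP n)); auto. split; auto. rewrite Rabs_right in Hx; lra.
      + destruct (HP n) as (_ & _ & _ & Heu & _). unfold U. rewrite <- Heu.
        apply (sol_lower k (e n) _ _ _ Rr (HP n)); auto. rewrite Rabs_left in Hx; lra.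
    - intros Rr HR. set (m := eta0 k Rr). assert (Hm : 0 < m) by (apply eta0_pos; auto).
      exists (Rr * (estar + Rr * (1 + Rr * / m ^ 3 * Rr) * Rr)). split.
      { assert (0 < / m ^ 3) by (apply Rinv_0_lt_compat, pow_lt; auto).
        apply Rmult_le_pos; auto.
        assert (0 <= Rr * (1 + Rr * / m ^ 3 * Rr) * Rr).
        { apply Rmult_le_pos; auto. apply Rmult_le_pos; auto.
          assert (0 <= Rr * / m ^ 3 * Rr) by (apply Rmult_le_pos; [apply Rmult_le_pos|]; lra). lra. }
        lra. }
      intros n x y Hx Hy. rewrite !HU.
      destruct (HP n) as (Hc & _ & _ & Heu & _ & _ & Hp & _).
      apply (Tm_lip k (e n) (U n) Rr m estar); auto.
      + intros z Hz. destruct (Rle_dec 0 z).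
        * apply (sol_lower k (e n) _ _ _ Rr (HP n)); auto. split; auto. rewrite Rabs_right in Hz; lra.
        * unfold U. rewrite <- Heu.
          apply (sol_lower k (e n) _ _ _ Rr (HP n)); auto. rewrite Rabs_left in Hz; lra.
      + rewrite Rabs_right. destruct (He n) as (_ & B2 & _). lra. specialize (Hepos n). lra.
    - intros n r. rewrite HU. reflexivity.
    - exact Hcv.
    - exact Hcv. }
  apply (IntSol_reg _ _ _ _ _ HS).
Qed.

Theorem lemma3 :
  exists k0 : R, 0 < k0 /\
    forall k : R, k0 <= k ->
      (exists eps, S_k k eps) /\
      bound (S_k k) /\
      (forall eps_star : R, is_lub (S_k k) eps_star ->
         has_pos_entire_radial_sol k eps_star).
Proof.
  exists 100. split. lra. intros k Hk. split; [|split].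
  - exists 1. split. lra. apply exist1; auto.
  - exists (1 + 6 * k / 5). intros x Hx. apply S_bound; auto. lra.
  - intros es Hes. apply sup_attained; auto.
Qed.
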